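(* For every fixed integer $s \ge 2$, the $s$-Club problem is solvable in polynomial time on graphs whose maximum independent set has size at most two.
   Context: The $s$-Club problem: given an undirected simple graph $G=(V,E)$ and $\ell\in\mathbb{N}$, decide whether there is a vertex set $S\subseteq V$ with $|S|\ge \ell$ such that the induced subgraph $G[S]$ has diameter at most $s$ (such an $S$ is called an $s$-club). 2-Club is the case $s=2$. *)

(* Defs.v *)
From mathcomp Require Import all_boot.
Set Implicit Arguments.
Unset Strict Implicit.
Unset Printing Implicit Defensive.

(* Graphs: a simple undirected graph on vertex set 'I_n is a symmetric,    *)
(* irreflexive relation e : rel 'I_n.                                      *)

Definition dist_le_in (n : nat) (e : rel 'I_n) (S : {set 'I_n})
    (s : nat) (u v : 'I_n) : Prop :=
  exists p : seq 'I_n,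
    [/\ all (fun x => x \in S) p, path e u p, last u p = v & size p <= s].

Definition is_sclub (n : nat) (e : rel 'I_n) (s : nat) (S : {set 'I_n}) : Prop :=
  forall u v, u \in S -> v \in S -> dist_le_in e S s u v.

Definition sclub_yes (n : nat) (e : rel 'I_n) (s l : nat) : Prop :=
  exists S : {set 'I_n}, l <= #|S| /\ is_sclub e s S.

Definition independent (n : nat) (e : rel 'I_n) (I : {set 'I_n}) : Prop :=
  forall u v, u \in I -> v \in I -> ~~ e u v.

Definition indep_number_le2 (n : nat) (e : rel 'I_n) : Prop :=
  forall I : {set 'I_n}, independent e I -> #|I| <= 2.

(* Machine model: unit-cost RAM with registers indexed by nat, addition,   *)
(* truncated subtraction, indirect addressing, conditional jump.           *)

Inductive instr : Type :=
| IConst of nat & nat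
| IAdd of nat & nat & nat
| ISub of nat & nat & nat
| ILoad of nat & nat
| IStore of nat & nat
| IJz of nat & nat
| IHalt.

Definition program := seq instr.
Definition memory := nat -> nat.

Definition upd (m : memory) (r v : nat) : memory :=
  fun x => if x == r then v else m x.

Definition step (P : program) (st : nat * memory) : option (nat * memory) :=
  let: (pc, m) := st in
  if pc < size P then
    match nth IHalt P pc with
    | IConst r k => Some (pc.+1, upd m r k)
    | IAdd r a b => Some (pc.+1, upd m r (m a + m b))
    | ISub r a b => Some (pc.+1, upd m r (m a - m b))
    | ILoad r a => Some (pc.+1, upd m r (m (m a)))
    | IStore a r => Some (pc.+1, upd m (m a) (m r))
    | IJz r t => Some (if m r == 0 then t else pc.+1, m)
    | IHalt => None
    end
  else None.

Fixpoint run (P : program) (t : nat) (st : nat * memory) : option memory :=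
  match step P st with
  | None => Some st.2
  | Some st' => if t is t'.+1 then run P t' st' else None
  end.

(* input encoding: M[0] = n, M[1] = l, M[2 + i*n + j] = [ij is an edge] *)
Definition edge_nat (n : nat) (e : rel 'I_n) (i j : nat) : bool :=
  match @insub nat (fun k => k < n) 'I_n i, @insub nat (fun k => k < n) 'I_n j with
  | Some x, Some y => e x y
  | _, _ => false
  end.

Definition init_mem (n : nat) (e : rel 'I_n) (l : nat) : memory :=
  fun a =>
    if a == 0 then n
    else if a == 1 then l
    else if a < 2 + n * n then nat_of_bool (edge_nat e ((a - 2) %/ n) ((a - 2) %% n))
    else 0.

(* length of the encoding: n^2 adjacency bits plus the binary length of l *)
Definition input_size (n l : nat) : nat := n * n + (trunc_log 2 l).+1.

Definition decides_within (P : program) (t : nat) (init : memory) (yes : Prop) : Prop :=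
  exists m', run P t (0, init) = Some m' /\ (m' 0 != 0 <-> yes).

(* Main.v *)
Require Import Defs.
From mathcomp Require Import all_boot.
From mathcomp Require Import zify.
Set Implicit Arguments.
Unset Strict Implicit.
Unset Printing Implicit Defensive.

Inductive cmd : Type :=
| CSkip
| CI of instr
| CSeq of cmd & cmd
| CWhile of nat & cmd
| CIf of nat & cmd & cmd.

Fixpoint csize (c : cmd) : nat :=
  match c with
  | CSkip => 0
  | CI _ => 1
  | CSeq c1 c2 => csize c1 + csize c2
  | CWhile _ b => (csize b).+2
  | CIf _ c1 c2 => (csize c1 + csize c2).+2
  end.

Fixpoint compile (Z o : nat) (c : cmd) : seq instr :=
  match c with
  | CSkip => [::]
  | CI i => [:: i]
  | CSeq c1 c2 => compile Z o c1 ++ compile Z (o + csize c1) c2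
  | CWhile r b => IJz r (o + csize b).+2 :: compile Z o.+1 b ++ [:: IJz Z o]
  | CIf r c1 c2 => IJz r (o + csize c1).+2 :: compile Z o.+1 c1 ++
                   IJz Z (o + csize c1 + csize c2).+2 :: compile Z (o + csize c1).+2 c2
  end.

Lemma size_compile Z o c : size (compile Z o c) = csize c.
Proof.
elim: c o => //= [c1 IH1 c2 IH2|r b IH|r c1 IH1 c2 IH2] o.
- by rewrite size_cat IH1 IH2.
- by rewrite size_cat IH /= addn1.
- by rewrite size_cat /= IH1 IH2 addnS.
Qed.

Definition writes_i (i : instr) : seq nat :=
  match i with
  | IConst r _ | IAdd r _ _ | ISub r _ _ | ILoad r _ => [:: r]
  | _ => [::]
  end.

Fixpoint writes (c : cmd) : seq nat :=
  match c with
  | CSkip => [::]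
  | CI i => writes_i i
  | CSeq c1 c2 => writes c1 ++ writes c2
  | CWhile _ b => writes b
  | CIf _ c1 c2 => writes c1 ++ writes c2
  end.

Definition basic (i : instr) : bool :=
  match i with
  | IConst _ _ | IAdd _ _ _ | ISub _ _ _ | ILoad _ _ => true
  | _ => false
  end.

Definition bsem (i : instr) (m : memory) : memory :=
  match i with
  | IConst r k => upd m r k
  | IAdd r a b => upd m r (m a + m b)
  | ISub r a b => upd m r (m a - m b)
  | ILoad r a => upd m r (m (m a))
  | _ => m
  end.

Inductive bs : cmd -> memory -> memory -> nat -> Prop :=
| bs_skip m : bs CSkip m m 0
| bs_basic i m : basic i -> bs (CI i) m (bsem i m) 1
| bs_seq c1 c2 m m1 m2 k1 k2 : bs c1 m m1 k1 -> bs c2 m1 m2 k2 -> bs (CSeq c1 c2) m m2 (k1 + k2)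
| bs_wfalse r b m : m r = 0 -> bs (CWhile r b) m m 1
| bs_wtrue r b m m1 m2 k1 k2 : m r != 0 -> bs b m m1 k1 -> bs (CWhile r b) m1 m2 k2 ->
    bs (CWhile r b) m m2 (k1 + k2).+2
| bs_itrue r c1 c2 m m1 k : m r != 0 -> bs c1 m m1 k -> bs (CIf r c1 c2) m m1 k.+2
| bs_ifalse r c1 c2 m m1 k : m r = 0 -> bs c2 m m1 k -> bs (CIf r c1 c2) m m1 k.+1.

Definition frame (W : seq nat) (m m' : memory) := forall x, x \notin W -> m' x = m x.

Lemma bs_frame c m m' k : bs c m m' k -> frame (writes c) m m'.
Proof.
elim=> {c m m' k} //=.
- move=> i m _ x; case: i => //= [r k|r a b|r a b|r a]; rewrite inE => /negbTE Hx; by rewrite /upd Hx.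
- move=> c1 c2 m m1 m2 k1 k2 _ H1 _ H2 x; rewrite mem_cat negb_or => /andP[a b].
  by rewrite H2 // H1.
- move=> r b m m1 m2 k1 k2 _ _ H1 _ H2 x Hx; by rewrite H2 // H1.
- move=> r c1 c2 m m1 k _ _ H x; rewrite mem_cat negb_or => /andP[a b]; exact: H.
- move=> r c1 c2 m m1 k _ _ H x; rewrite mem_cat negb_or => /andP[a b]; exact: H.
Qed.

Fixpoint steps (P : program) (k : nat) (st : nat * memory) : option (nat * memory) :=
  if k is k'.+1 then (if step P st is Some st' then steps P k' st' else None) else Some st.

Lemma steps_S P k st : steps P k.+1 st =
  if step P st is Some st' then steps P k st' else None.
Proof. by []. Qed.

Lemma steps_0 P st : steps P 0 st = Some st.
Proof. by []. Qed.

Lemma steps_add P a b st :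
  steps P (a + b) st = if steps P a st is Some st' then steps P b st' else None.
Proof.
elim: a st => //= a IH st; case: (step P st) => //.
Qed.

Lemma run_S P T st : run P T.+1 st =
  match step P st with None => Some st.2 | Some st' => run P T st' end.
Proof. by []. Qed.

Lemma run_0 P st : run P 0 st =
  match step P st with None => Some st.2 | Some st' => None end.
Proof. by []. Qed.

Lemma run_steps P k T st st' : steps P k st = Some st' -> step P st' = None -> k <= T ->
  run P T st = Some st'.2.
Proof.
elim: k T st => [|k IH] [|T] st.
- by case=> <- Hn _; rewrite run_0 Hn.
- by case=> <- Hn _; rewrite run_S Hn.
- by [].
- move=> H Hn HT; rewrite run_S; move: H => /=.
  case: (step P st) => [st1|] // H; exact: IH.
Qed.

Definition code_at (P : program) (o : nat) (l : seq instr) :=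
  exists pre post, P = pre ++ l ++ post /\ size pre = o.

Lemma code_at_catl P o l1 l2 : code_at P o (l1 ++ l2) -> code_at P o l1.
Proof. by case=> pre [post [-> <-]]; exists pre, (l2 ++ post); rewrite -catA. Qed.

Lemma code_at_catr P o l1 l2 : code_at P o (l1 ++ l2) -> code_at P (o + size l1) l2.
Proof.
case=> pre [post [-> <-]]; exists (pre ++ l1), post; split; first by rewrite -!catA.
by rewrite size_cat.
Qed.

Lemma code_at_cons P o i l : code_at P o (i :: l) -> code_at P o [:: i] /\ code_at P o.+1 l.
Proof.
move=> H; split; first exact: (@code_at_catl P o [:: i] l H).
by have := @code_at_catr P o [:: i] l H; rewrite addn1.
Qed.

Lemma code_at_step P o i m : code_at P o [:: i] ->
  step P (o, m) = if i is IHalt then None else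
  Some (match i with
        | IConst r k => (o.+1, upd m r k)
        | IAdd r a b => (o.+1, upd m r (m a + m b))
        | ISub r a b => (o.+1, upd m r (m a - m b))
        | ILoad r a => (o.+1, upd m r (m (m a)))
        | IStore a r => (o.+1, upd m (m a) (m r))
        | IJz r t => (if m r == 0 then t else o.+1, m)
        | IHalt => (o, m)
        end).
Proof.
case=> pre [post [-> <-]] /=.
have -> : size pre < size (pre ++ i :: post) by rewrite size_cat /= addnS ltnS leq_addr.
rewrite nth_cat ltnn subnn /=.
by case: i.
Qed.

Lemma bs_sound Z c m m' k : bs c m m' k -> Z \notin writes c -> m Z = 0 ->
  forall P o, code_at P o (compile Z o c) -> steps P k (o, m) = Some (o + csize c, m').
Proof.
elim=> {c m m' k}.
- by move=> m _ _ P o _; rewrite addn0.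
- move=> i m Hb _ _ P o Hc; rewrite steps_S (code_at_step m Hc).
  by case: i Hb Hc => //= *; rewrite addn1.
- move=> c1 c2 m m1 m2 k1 k2 H1 IH1 H2 IH2; rewrite mem_cat negb_or => /andP[W1 W2] HZ P o Hc.
  rewrite steps_add (IH1 W1 HZ P o (code_at_catl Hc)).
  have HZ1 : m1 Z = 0 by rewrite (bs_frame H1).
  have := code_at_catr Hc; rewrite size_compile => Hc2.
  by rewrite (IH2 W2 HZ1 P _ Hc2) addnA.
- move=> r b m Hr _ _ P o Hc; have [Hc1 _] := code_at_cons Hc.
  by rewrite steps_S (code_at_step m Hc1) Hr eqxx steps_0 /= !addnS.
- move=> r b m m1 m2 k1 k2 Hr Hb IHb Hw IHw W HZ P o Hc.
  have [Hc1 Hc2] := code_at_cons Hc.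
  rewrite steps_S (code_at_step m Hc1) (negbTE Hr).
  rewrite -addnS steps_add (IHb W HZ P o.+1 (code_at_catl Hc2)).
  have HZ1 : m1 Z = 0 by rewrite (bs_frame Hb).
  have := code_at_catr Hc2; rewrite size_compile => Hc3.
  rewrite steps_S (code_at_step m1 Hc3) HZ1 eqxx.
  by rewrite (IHw W HZ1 P o Hc).
- move=> r c1 c2 m m1 k Hr H1 IH1; rewrite mem_cat negb_or => /andP[W1 W2] HZ P o Hc.
  have [Hc1 Hc2] := code_at_cons Hc.
  rewrite steps_S (code_at_step m Hc1) (negbTE Hr).
  rewrite -addn1 steps_add (IH1 W1 HZ P o.+1 (code_at_catl Hc2)).
  have HZ1 : m1 Z = 0 by rewrite (bs_frame H1).
  have := code_at_catr Hc2; rewrite size_compile => Hc3.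
  have [Hc4 _] := code_at_cons Hc3.
  rewrite steps_S (code_at_step m1 Hc4) HZ1 eqxx steps_0 /=; congr (Some (_, _)); lia.
- move=> r c1 c2 m m1 k Hr H2 IH2; rewrite mem_cat negb_or => /andP[W1 W2] HZ P o Hc.
  have [Hc1 Hc2] := code_at_cons Hc.
  rewrite steps_S (code_at_step m Hc1) Hr eqxx.
  have := code_at_catr Hc2; rewrite size_compile => Hc3.
  have [_ Hc4] := code_at_cons Hc3.
  rewrite (IH2 W2 HZ P _ Hc4) /=; congr (Some (_, _)); lia.
Qed.

Definition Run (c : cmd) (m : memory) (Q : memory -> nat -> Prop) :=
  exists m' k, bs c m m' k /\ Q m' k.

Lemma run_seq c1 c2 m Q :
  Run c1 m (fun m1 k1 => Run c2 m1 (fun m2 k2 => Q m2 (k1 + k2))) -> Run (CSeq c1 c2) m Q.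
Proof.
case=> m1 [k1 [H1 [m2 [k2 [H2 HQ]]]]]; exists m2, (k1 + k2); split => //.
exact: bs_seq H1 H2.
Qed.

Lemma run_basic i m Q : basic i -> Q (bsem i m) 1 -> Run (CI i) m Q.
Proof. by move=> Hb HQ; exists (bsem i m), 1; split => //; apply: bs_basic. Qed.

Lemma run_skip m Q : Q m 0 -> Run CSkip m Q.
Proof. by move=> HQ; exists m, 0; split => //; apply: bs_skip. Qed.

Lemma run_if r c1 c2 m Q :
  (m r != 0 -> Run c1 m (fun m' k => Q m' k.+2)) ->
  (m r = 0 -> Run c2 m (fun m' k => Q m' k.+1)) ->
  Run (CIf r c1 c2) m Q.
Proof.
move=> H1 H2; have [Hr|Hr] := eqVneq (m r) 0.
- have [m' [k [H HQ]]] := H2 Hr; exists m', k.+1; split => //; exact: bs_ifalse.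
- have [m' [k [H HQ]]] := H1 Hr; exists m', k.+2; split => //; exact: bs_itrue.
Qed.

Lemma run_weaken c m Q Q' : Run c m Q ->
  (forall m' k, frame (writes c) m m' -> Q m' k -> Q' m' k) -> Run c m Q'.
Proof.
case=> m' [k [H HQ]] HW; exists m', k; split => //; apply: HW => //; exact: bs_frame H.
Qed.

Lemma run_while r b m (I : memory -> Prop) (mu : memory -> nat) Bb (Q : memory -> nat -> Prop) :
  I m ->
  (forall m, I m -> m r != 0 ->
     Run b m (fun m' k => [/\ I m', mu m' < mu m & k <= Bb])) ->
  (forall m, I m -> m r = 0 -> Q m 1) ->
  (forall m k k', Q m k -> k' <= k -> Q m k') ->
  Run (CWhile r b) m (fun m' k => Q m' (k - mu m * (Bb + 2))).
Proof.
move=> Hm Hb HQ Hmono.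
elim: {m}(mu m) {-2}m (leqnn (mu m)) Hm => [|N IH] m Hmu Hm.
- case: (eqVneq (m r) 0) => Hr.
  + exists m, 1; split; first exact: bs_wfalse. by apply: (Hmono _ 1) => //; [apply: HQ|rewrite leq_subr].
  + have [m1 [k1 [H1 [_ Hlt _]]]] := Hb m Hm Hr. by move: (leq_trans Hlt Hmu).
- case: (eqVneq (m r) 0) => Hr.
  + exists m, 1; split; first exact: bs_wfalse. by apply: (Hmono _ 1) => //; [apply: HQ|rewrite leq_subr].
  + have [m1 [k1 [H1 [Hm1 Hlt Hk1]]]] := Hb m Hm Hr.
    have Hmu1 : mu m1 <= N by rewrite -ltnS (leq_trans Hlt Hmu).
    have [m2 [k2 [H2 HQ2]]] := IH m1 Hmu1 Hm1.
    exists m2, (k1 + k2).+2; split; first exact: bs_wtrue H1 H2.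
    apply: (Hmono _ _ _ HQ2).
    have : mu m1 * (Bb + 2) + (Bb + 2) <= mu m * (Bb + 2).
      by rewrite addnC -mulSn leq_mul2r Hlt orbT.
    lia.
Qed.

Definition Bfor (n Bb : nat) := 3 + n * (Bb + 4).

Definition forc (one V C : nat) (body : cmd) : cmd :=
  CSeq (CI (IConst V 0)) (CSeq (CI (ISub C 0 V))
    (CWhile C (CSeq body (CSeq (CI (IAdd V V one)) (CI (ISub C 0 V)))))).

Lemma run_for (n one V C : nat) body m (Inv : nat -> memory -> Prop) Bb :
  V != C -> V != 0 -> C != 0 -> V != one ->
  V \notin writes body -> C \notin writes body ->
  (forall k m m', Inv k m -> (forall x, x != V -> x != C -> m' x = m x) -> Inv k m') ->
  (forall k m, Inv k m -> m 0 = n /\ m one = 1) ->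
  (forall k m, k < n -> Inv k m -> m V = k -> Run body m (fun m' kb => Inv k.+1 m' /\ kb <= Bb)) ->
  Inv 0 m ->
  Run (forc one V C body) m (fun m' k => Inv n m' /\ k <= Bfor n Bb).
Proof.
move=> HVC HV0 HC0 HV1 WV WC Hstab Hn Hbody H0.
have HCV : C != V by rewrite eq_sym.
have E1 : (0 == V) = false by rewrite eq_sym (negbTE HV0).
have E2 : (0 == C) = false by rewrite eq_sym (negbTE HC0).
have E3 := negbTE HVC. have E4 := negbTE HCV. have E5 := negbTE HV0. have E6 := negbTE HC0.
apply: run_seq; apply: run_basic => //=.
apply: run_seq; apply: run_basic => //=.
set m0 := upd (upd m V 0) C _.
have Hm0 : Inv 0 m0 by apply: (Hstab _ m) => // x Hx1 Hx2; rewrite /m0 /upd (negbTE Hx1) (negbTE Hx2).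
have [Hm0n Hm01] := Hn _ _ Hm0.
pose I m := exists k, [/\ k <= n, m V = k, m C = n - k & Inv k m].
pose mu m := n - m V.
have HI0 : I m0.
  exists 0; split => //; first by rewrite /m0 /upd (negbTE HVC) eqxx.
  by rewrite /m0 /upd ?eqxx ?E1 ?E2 ?E3 ?E4 ?E5 ?E6 -(Hn _ _ H0).1 subn0.
have Hmu0 : mu m0 = n by rewrite /mu /m0 /upd (negbTE HVC) eqxx subn0.
have Hb : forall m1, I m1 -> m1 C != 0 ->
   Run (CSeq body (CSeq (CI (IAdd V V one)) (CI (ISub C 0 V)))) m1
     (fun m' k => [/\ I m', mu m' < mu m1 & k <= Bb + 2]).
  move=> m1 [k [Hk HV HC Hinv]] HC1.
  have Hkn : k < n by rewrite HC subn_eq0 -ltnNge in HC1.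
  apply: run_seq; apply: run_weaken (Hbody k m1 Hkn Hinv HV) _ => m2 kb Hfr [Hinv2 Hkb].
  have [Hm2n Hm21] := Hn _ _ Hinv2.
  have HV2 : m2 V = k by rewrite Hfr.
  apply: run_seq; apply: run_basic => //=.
  apply: run_basic => //=.
  set m3 := upd (upd m2 V _) C _.
  have HV3 : m3 V = k.+1 by rewrite /m3 /upd (negbTE HVC) eqxx HV2 Hm21 addn1.
  have HC3 : m3 C = n - k.+1.
    by rewrite /m3 /upd ?eqxx ?E1 ?E2 ?E3 ?E4 ?E5 ?E6 Hm2n HV2 Hm21 addn1.
  split.
  + exists k.+1; split => //.
    by apply: (Hstab _ m2) => // x Hx1 Hx2; rewrite /m3 /upd (negbTE Hx1) (negbTE Hx2).
  + by rewrite /mu HV3 HV; lia.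
  + lia.
have HQ : forall m1, I m1 -> m1 C = 0 -> Inv n m1 /\ 1 <= 1.
  move=> m1 [k [Hk HV HC Hinv]] HC1.
  have -> : n = k by move: HC1; rewrite HC; lia.
  by [].
have := @run_while C _ m0 I mu (Bb + 2) (fun m k => Inv n m /\ k <= 1) HI0 Hb HQ
   (fun m k k' '(conj A B) Hk => conj A (leq_trans Hk B)).
rewrite Hmu0 => H.
apply: run_weaken H _ => m' k _ [Hinv Hk]; split => //.
rewrite /Bfor; lia.
Qed.

Lemma run_wtrue r b m Q : m r != 0 ->
  Run b m (fun m1 k1 => Run (CWhile r b) m1 (fun m2 k2 => Q m2 (k1 + k2).+2)) ->
  Run (CWhile r b) m Q.
Proof.
move=> Hr [m1 [k1 [H1 [m2 [k2 [H2 HQ]]]]]]; exists m2, (k1 + k2).+2; split => //.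
exact: bs_wtrue H1 H2.
Qed.

Lemma run_wfalse r b m Q : m r = 0 -> Q m 1 -> Run (CWhile r b) m Q.
Proof. by move=> Hr HQ; exists m, 1; split => //; apply: bs_wfalse. Qed.


Definition rg (R k : nat) := (R + k).+2.

Lemma rg_eq R a b : (rg R a == rg R b) = (a == b).
Proof. by rewrite /rg !eqSS eqn_add2l. Qed.

Lemma run_set r v m Q :
  (forall m', m' r = v -> (forall x, x != r -> m' x = m x) -> Q m' 1) -> Run (CI (IConst r v)) m Q.
Proof.
move=> H; apply: run_basic => //=; apply: H; first by rewrite /upd eqxx.
by move=> x /negbTE Hx; rewrite /upd Hx.
Qed.

Lemma run_add r a b m Q :
  (forall m', m' r = m a + m b -> (forall x, x != r -> m' x = m x) -> Q m' 1) ->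
  Run (CI (IAdd r a b)) m Q.
Proof.
move=> H; apply: run_basic => //=; apply: H; first by rewrite /upd eqxx.
by move=> x /negbTE Hx; rewrite /upd Hx.
Qed.

Lemma run_sub r a b m Q :
  (forall m', m' r = m a - m b -> (forall x, x != r -> m' x = m x) -> Q m' 1) ->
  Run (CI (ISub r a b)) m Q.
Proof.
move=> H; apply: run_basic => //=; apply: H; first by rewrite /upd eqxx.
by move=> x /negbTE Hx; rewrite /upd Hx.
Qed.

Lemma run_ld r a m Q :
  (forall m', m' r = m (m a) -> (forall x, x != r -> m' x = m x) -> Q m' 1) ->
  Run (CI (ILoad r a)) m Q.
Proof.
move=> H; apply: run_basic => //=; apply: H; first by rewrite /upd eqxx.
by move=> x /negbTE Hx; rewrite /upd Hx.
Qed.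

Definition Mem0 n (e : rel 'I_n) l (m : memory) :=
  [/\ m 0 = n, m 1 = l & forall i j, j < i < n -> m (2 + i * n + j) = edge_nat e i j].

Definition Base n (e : rel 'I_n) l R m := [/\ m (rg R 0) = 0, m (rg R 1) = 1 & Mem0 e l m].

Definition Rok n R := forall i j, j < i < n -> (2 + i * n + j < rg R 0) || (rg R 40 <= 2 + i * n + j).

Definition okW R (W : seq nat) := all (fun x => (rg R 2 <= x) && (x < rg R 40)) W.

Lemma base_frame n (e : rel 'I_n) l R m m' W : Rok n R -> okW R W -> Base e l R m -> frame W m m' ->
  Base e l R m'.
Proof.
move=> HR /allP HW [H0 H1 [M0 M1 M2]] Hf.
have Hout x : ((x < rg R 2) || (rg R 40 <= x)) -> m' x = m x.
  move=> Hx; apply: Hf; apply/negP => /HW; move: Hx; lia.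
split.
- by rewrite Hout ?H0 //= /rg; lia.
- by rewrite Hout ?H1 //= /rg; lia.
split.
- by rewrite Hout ?M0 //= /rg; lia.
- by rewrite Hout ?M1 //= /rg; lia.
- move=> i j Hij; rewrite Hout ?M2 //; move: (HR i j Hij); rewrite /rg; lia.
Qed.

Definition mov R r a := CI (IAdd r a (rg R 0)).

Definition adjbody R out :=
  CSeq (CI (IConst (rg R 6) 0)) (CSeq (mov R (rg R 7) (rg R 4))
  (CSeq (CWhile (rg R 7) (CSeq (CI (IAdd (rg R 6) (rg R 6) 0)) (CI (ISub (rg R 7) (rg R 7) (rg R 1)))))
  (CSeq (CI (IAdd (rg R 6) (rg R 6) (rg R 5))) (CSeq (CI (IAdd (rg R 6) (rg R 6) (rg R 1)))
  (CSeq (CI (IAdd (rg R 6) (rg R 6) (rg R 1))) (CI (ILoad out (rg R 6)))))))).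

Definition adjc R i j out :=
  CSeq (CI (ISub (rg R 2) i j)) (CSeq (CI (ISub (rg R 3) j i))
  (CIf (rg R 2) (CSeq (mov R (rg R 4) i) (CSeq (mov R (rg R 5) j) (adjbody R out)))
     (CIf (rg R 3) (CSeq (mov R (rg R 4) j) (CSeq (mov R (rg R 5) i) (adjbody R out)))
        (CI (IConst out 0))))).

Definition adjn n (e : rel 'I_n) (i j : nat) : nat := edge_nat e i j.

Lemma mul_loop n R h m Q :
  m (rg R 7) = h -> m 0 = n -> m (rg R 1) = 1 ->
  (forall m' k, k <= 1 + 4 * h -> m' (rg R 6) = m (rg R 6) + h * n ->
     frame [:: rg R 6; rg R 7] m m' -> Q m' k) ->
  Run (CWhile (rg R 7) (CSeq (CI (IAdd (rg R 6) (rg R 6) 0)) (CI (ISub (rg R 7) (rg R 7) (rg R 1))))) m Q.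
Proof.
elim: h m Q => [|h IH] m Q Hh Hn H1 HQ.
- apply: run_wfalse => //; apply: HQ => //; first by rewrite mul0n addn0.
- apply: run_wtrue; first by rewrite Hh.
  apply: run_seq; apply: run_add => m1 E1 F1; apply: run_sub => m2 E2 F2.
  apply: IH.
  + by rewrite E2 !F1 ?rg_eq // Hh H1 subn1.
  + by rewrite F2 ?rg_eq // F1 ?rg_eq.
  + by rewrite F2 ?rg_eq // F1 ?rg_eq.
  move=> m' k Hk E' Fr; apply: HQ.
  + lia.
  + by rewrite E' F2 ?rg_eq // E1 Hn mulSn; lia.
  + move=> x Hx; rewrite Fr // F2 ?F1 //; move: Hx; rewrite !inE; case/norP => a b //.
Qed.

Lemma frame_cons W x m m' : frame W m m' -> frame (x :: W) m m'.
Proof. by move=> H y; rewrite inE negb_or => /andP[_ /H]. Qed.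

Lemma adjbody_spec n (e : rel 'I_n) l R out h lo m :
  Rok n R -> Base e l R m -> m (rg R 4) = h -> m (rg R 5) = lo -> lo < h < n ->
  Run (adjbody R out) m (fun m' k => k <= 4 * n + 7 /\ m' out = adjn e h lo).
Proof.
move=> HR [HZ H1 [Hn Hl Hin]] Hh Hlo /andP[Hlh Hhn].
apply: run_seq; apply: run_set => m1 E1 F1.
apply: run_seq; apply: run_add => m2 E2 F2.
apply: run_seq; apply: (@mul_loop n R h).
- by rewrite E2 !F1 ?rg_eq // Hh HZ addn0.
- by rewrite F2 // F1.
- by rewrite F2 ?rg_eq // F1 ?rg_eq.
move=> m3 k3 Hk3 E3 F3.
have F3' x : x != rg R 6 -> x != rg R 7 -> m3 x = m2 x.
  by move=> a b; apply: F3; rewrite !inE negb_or a b.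
apply: run_seq; apply: run_add => m4 E4 F4.
apply: run_seq; apply: run_add => m5 E5 F5.
apply: run_seq; apply: run_add => m6 E6 F6.
apply: run_ld => m7 E7 F7.
have Haddr : m6 (rg R 6) = 2 + h * n + lo.
  rewrite E6 E5 E4 E3 F2 ?rg_eq // E1 !F5 ?rg_eq // !F4 ?rg_eq //.
  rewrite !F3' ?rg_eq // !F2 ?rg_eq // !F1 ?rg_eq // Hlo H1; lia.
have Hnot : (2 + h * n + lo < rg R 0) || (rg R 40 <= 2 + h * n + lo).
  by apply: HR; rewrite Hlh Hhn.
split; first lia.
rewrite E7 Haddr F6; last by move: Hnot; rewrite /rg; lia.
rewrite F5; last by move: Hnot; rewrite /rg; lia.
rewrite F4; last by move: Hnot; rewrite /rg; lia.
rewrite F3'; [|by move: Hnot; rewrite /rg; lia|by move: Hnot; rewrite /rg; lia].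
rewrite F2; last by move: Hnot; rewrite /rg; lia.
rewrite F1; last by move: Hnot; rewrite /rg; lia.
by rewrite Hin // Hlh Hhn.
Qed.

Lemma edge_nat_sym n (e : rel 'I_n) a b : symmetric e -> edge_nat e a b = edge_nat e b a.
Proof.
move=> Hs; rewrite /edge_nat.
by case: (insub a) => [x|]; case: (insub b) => [y|] //.
Qed.

Lemma edge_nat_irr n (e : rel 'I_n) a : irreflexive e -> edge_nat e a a = false.
Proof. by move=> Hi; rewrite /edge_nat; case: (insub a) => [x|] //. Qed.

Lemma adjc_spec n (e : rel 'I_n) l R i j out m :
  symmetric e -> irreflexive e ->
  Rok n R -> Base e l R m -> m i < n -> m j < n ->
  i \notin [:: rg R 2; rg R 3; rg R 4] -> j \notin [:: rg R 2; rg R 3; rg R 4] ->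
  Run (adjc R i j out) m (fun m' k => k <= 4 * n + 15 /\ m' out = adjn e (m i) (m j)).
Proof.
move=> Hs Hirr HR HB Hi Hj; rewrite !inE !negb_or => /and3P[Hi2 Hi3 Hi4] /and3P[Hj2 Hj3 Hj4].
have [HZ H1 HM] := HB.
apply: run_seq; apply: run_sub => m1 E1 F1.
apply: run_seq; apply: run_sub => m2 E2 F2.
have Bm2 : Base e l R m2.
  apply: (base_frame (W := [:: rg R 3; rg R 2])) HB _ => //.
    by rewrite /okW /= /rg; apply/andP; split; apply/andP; split; lia.
  move=> x; rewrite !inE negb_or => /andP[a b]; rewrite F2 // F1 //.
have [HZ2 _ _] := Bm2.
have Hm2i : m2 i = m i by rewrite F2 // F1.
have Hm2j : m2 j = m j by rewrite F2 // F1.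
apply: run_if => [HT|HT].
-
  apply: run_seq; apply: run_add => m3 E3 F3.
  apply: run_seq; apply: run_add => m4 E4 F4.
  have Bm4 : Base e l R m4.
    apply: (base_frame (W := [:: rg R 5; rg R 4])) Bm2 _ => //.
      by rewrite /okW /= /rg; apply/andP; split; apply/andP; split; lia.
    move=> x; rewrite !inE negb_or => /andP[a b]; rewrite F4 // F3 //.
  have Hji : m j < m i.
    by move: HT; rewrite F2 ?rg_eq // E1 subn_eq0 -ltnNge.
  apply: run_weaken (adjbody_spec out HR Bm4 (h := m i) (lo := m j) _ _ _) _.
  + by rewrite F4 ?rg_eq // E3 Hm2i HZ2 addn0.
  + by rewrite E4 F3 ?rg_eq // Hm2j F3 ?rg_eq // HZ2 addn0.
  + by rewrite Hji Hi.
  move=> m' k _ [Hk ->]; split; first lia. by [].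
- apply: run_if => [HT2|HT2].
  + apply: run_seq; apply: run_add => m3 E3 F3.
    apply: run_seq; apply: run_add => m4 E4 F4.
    have Bm4 : Base e l R m4.
      apply: (base_frame (W := [:: rg R 5; rg R 4])) Bm2 _ => //.
        by rewrite /okW /= /rg; apply/andP; split; apply/andP; split; lia.
      move=> x; rewrite !inE negb_or => /andP[a b]; rewrite F4 // F3 //.
    have Hij : m i < m j.
      by move: HT2; rewrite E2 !F1 // subn_eq0 -ltnNge.
    apply: run_weaken (adjbody_spec out HR Bm4 (h := m j) (lo := m i) _ _ _) _.
    * by rewrite F4 ?rg_eq // E3 Hm2j HZ2 addn0.
    * by rewrite E4 F3 ?rg_eq // Hm2i F3 ?rg_eq // HZ2 addn0.
    * by rewrite Hij Hj.
    move=> m' k _ [Hk ->]; split; first lia. by rewrite /adjn edge_nat_sym.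
  + apply: run_set => m3 E3 F3; split; first lia.
    have Heq : m i = m j.
      move: HT HT2; rewrite F2 ?rg_eq // E1 E2 !F1 //; lia.
    by rewrite E3 /adjn Heq edge_nat_irr.
Qed.

Lemma has_iotaS (f : pred nat) k : has f (iota 0 k.+1) = has f (iota 0 k) || f k.
Proof. by rewrite -addn1 iotaD has_cat /= orbF. Qed.

Lemma nat_bool_neq0 (b : bool) : (nat_of_bool b != 0) = b.
Proof. by case: b. Qed.

Lemma nat_bool_eq0 (b : bool) : (nat_of_bool b = 0) -> b = false.
Proof. by case: b. Qed.

Definition ONE R := rg R 1.

Definition in2n n (e : rel 'I_n) (p q : nat) : bool :=
  [|| p == q, edge_nat e p q | has (fun a => edge_nat e p a && edge_nat e a q) (iota 0 n)].

Definition in2c R pa qa oa :=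
  let P := rg R pa in let Q := rg R qa in let O := rg R oa in
  CSeq (CI (ISub (rg R 12) P Q)) (CSeq (CI (ISub (rg R 13) Q P)) (CSeq (CI (IConst O 0))
  (CSeq (CIf (rg R 12) CSkip (CIf (rg R 13) CSkip (CI (IConst O 1))))
  (CSeq (adjc R P Q (rg R 10)) (CSeq (CIf (rg R 10) (CI (IConst O 1)) CSkip)
  (forc (ONE R) (rg R 8) (rg R 9)
    (CSeq (adjc R P (rg R 8) (rg R 10))
      (CIf (rg R 10) (CSeq (adjc R (rg R 8) Q (rg R 11)) (CIf (rg R 11) (CI (IConst O 1)) CSkip))
         CSkip)))))))).

Definition in2B n := 4 * n + 24 + Bfor n (8 * n + 35).

Lemma Base_regs n (e : rel 'I_n) l R m : Base e l R m -> m 0 = n /\ m (rg R 1) = 1.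
Proof. by case=> _ -> [-> _ _]. Qed.

Lemma in2c_spec n (e : rel 'I_n) l R pa qa oa m :
  symmetric e -> irreflexive e -> Rok n R ->
  13 < pa < 40 -> 13 < qa < 40 -> 13 < oa < 40 -> oa != pa -> oa != qa ->
  Base e l R m -> m (rg R pa) < n -> m (rg R qa) < n ->
  Run (in2c R pa qa oa) m
    (fun m' k => k <= in2B n /\ m' (rg R oa) = in2n e (m (rg R pa)) (m (rg R qa))).
Proof.
move=> Hs Hirr HR Hpa Hqa Hoa Hop Hoq HB Hp Hq.
set P := rg R pa; set Q := rg R qa; set O := rg R oa.
set pv := m P; set qv := m Q.
have nP x : 13 < x < 40 -> x != pa -> rg R x != P by move=> ? ?; rewrite /P rg_eq.
rewrite /in2c -/P -/Q -/O.
apply: run_seq; apply: run_sub => m1 E1 F1.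
apply: run_seq; apply: run_sub => m2 E2 F2.
apply: run_seq; apply: run_set => m3 E3 F3.
have W3 : frame [:: O; rg R 13; rg R 12] m m3.
  move=> x; rewrite !inE !negb_or => /and3P[a b c]; by rewrite F3 // F2 // F1.
have B3 : Base e l R m3.
  by apply: (base_frame HR _ HB W3); rewrite /okW /= /O /rg; lia.
have P3 : m3 P = pv by rewrite W3 // !inE /O /P !rg_eq; lia.
have Q3 : m3 Q = qv by rewrite W3 // !inE /O /Q !rg_eq; lia.
apply: run_seq; apply: run_weaken (_ : Run (CIf (rg R 12) CSkip (CIf (rg R 13) CSkip (CI (IConst O 1)))) m3
   (fun m4 k4 => k4 <= 3 /\ m4 O = (pv == qv))) _.
  apply: run_if => [H12|H12].
  - apply: run_skip; split => //; rewrite E3.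
    move: H12; rewrite F3 /O ?rg_eq; last lia.
    rewrite F2 ?rg_eq // E1 /pv /qv; case: (eqVneq (m P) (m Q)) => [E|] //; by rewrite E subnn.
  - apply: run_if => [H13|H13].
    + apply: run_skip; split => //; rewrite E3.
      move: H13; rewrite F3 /O ?rg_eq; last lia.
      rewrite E2 !F1 ?rg_eq /pv /qv; lia.
    + apply: run_set => m4 E4 F4; split => //; rewrite E4.
      move: H12 H13; rewrite !F3 /O ?rg_eq; try lia.
      rewrite E2 F2 ?rg_eq // E1 !F1 ?rg_eq /pv /qv; lia.
move=> m4 k4 W4 [Hk4 E4].
have B4 : Base e l R m4 by apply: (base_frame HR _ B3 W4); rewrite /okW /= /O /rg; lia.
have P4 : m4 P = pv by rewrite W4 // !inE /O /P !rg_eq; lia.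
have Q4 : m4 Q = qv by rewrite W4 // !inE /O /Q !rg_eq; lia.
apply: run_seq; apply: run_weaken (adjc_spec (rg R 10) Hs Hirr HR B4 _ _ _ _) _.
- by rewrite P4.
- by rewrite Q4.
- by rewrite !inE /P !rg_eq; lia.
- by rewrite !inE /Q !rg_eq; lia.
move=> m5 k5 W5 [Hk5 E5].
have B5 : Base e l R m5 by apply: (base_frame HR _ B4 W5); rewrite /okW /= /rg; lia.
have P5 : m5 P = pv by rewrite W5 // /= !inE /P !rg_eq; lia.
have Q5 : m5 Q = qv by rewrite W5 // /= !inE /Q !rg_eq; lia.
have O5 : m5 O = (pv == qv) by rewrite W5 // /= !inE /O !rg_eq; lia.
apply: run_seq; apply: run_weaken (_ : Run (CIf (rg R 10) (CI (IConst O 1)) CSkip) m5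
   (fun m6 k6 => k6 <= 3 /\ m6 O = (pv == qv) || edge_nat e pv qv)) _.
  apply: run_if => [H10|H10].
  - apply: run_set => m6 E6 F6; split => //; rewrite E6.
    move: H10; rewrite E5 /adjn P4 Q4 nat_bool_neq0 => ->; by rewrite orbT.
  - apply: run_skip; split => //; rewrite O5.
    move: H10; rewrite E5 /adjn P4 Q4 => /nat_bool_eq0 ->; by rewrite orbF.
move=> m6 k6 W6 [Hk6 E6].
have B6 : Base e l R m6 by apply: (base_frame HR _ B5 W6); rewrite /okW /= /O /rg; lia.
pose f a := edge_nat e pv a && edge_nat e a qv.
pose Inv k (m : memory) := [/\ Base e l R m, m P = pv, m Q = qv &
   m O = [|| pv == qv, edge_nat e pv qv | has f (iota 0 k)]].
apply: run_weaken (@run_for n (ONE R) (rg R 8) (rg R 9) (CSeq (adjc R P (rg R 8) (rg R 10))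
      (CIf (rg R 10) (CSeq (adjc R (rg R 8) Q (rg R 11)) (CIf (rg R 11) (CI (IConst O 1)) CSkip))
         CSkip)) m6 Inv (8 * n + 35) _ _ _ _ _ _ _ _ _ _) _ => //.
- by rewrite rg_eq.
- by rewrite /ONE rg_eq.
- by rewrite /= /O !inE !rg_eq; lia.
- by rewrite /= /O !inE !rg_eq; lia.
- move=> k ma mb [Ba Pa Qa Oa] Hab; split.
  + apply: (base_frame HR _ Ba (W := [:: rg R 8; rg R 9])); first by rewrite /okW /= /rg; lia.
    move=> x; rewrite !inE negb_or => /andP[a b]; exact: Hab.
  + by rewrite Hab // /P rg_eq; lia.
  + by rewrite Hab // /Q rg_eq; lia.
  + by rewrite Hab // /O rg_eq; lia.
- by move=> k ma [Ba _ _ _]; apply: Base_regs Ba.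
- move=> k ma Hk [Ba Pa Qa Oa] HA.
  apply: run_seq; apply: run_weaken (adjc_spec (rg R 10) Hs Hirr HR Ba _ _ _ _) _.
  + by rewrite Pa.
  + by rewrite HA.
  + by rewrite !inE /P !rg_eq; lia.
  + by rewrite !inE !rg_eq.
  move=> mb kb Wb [Hkb Eb].
  have Bb : Base e l R mb by apply: (base_frame HR _ Ba Wb); rewrite /okW /= /rg; lia.
  have Pb : mb P = pv by rewrite Wb // /= !inE /P !rg_eq; lia.
  have Qb : mb Q = qv by rewrite Wb // /= !inE /Q !rg_eq; lia.
  have Ob : mb O = ma O by rewrite Wb // /= !inE /O !rg_eq; lia.
  have Ab : mb (rg R 8) = k by rewrite Wb // /= !inE !rg_eq.
  apply: run_if => [H10|H10].
  + apply: run_seq; apply: run_weaken (adjc_spec (rg R 11) Hs Hirr HR Bb _ _ _ _) _.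
    * by rewrite Ab.
    * by rewrite Qb.
    * by rewrite !inE !rg_eq.
    * by rewrite !inE /Q !rg_eq; lia.
    move=> mc kc Wc [Hkc Ec].
    have Bc : Base e l R mc by apply: (base_frame HR _ Bb Wc); rewrite /okW /= /rg; lia.
    have Pc : mc P = pv by rewrite Wc // /= !inE /P !rg_eq; lia.
    have Qc : mc Q = qv by rewrite Wc // /= !inE /Q !rg_eq; lia.
    have Oc : mc O = ma O by rewrite Wc // /= !inE /O !rg_eq; lia.
    have F1' : edge_nat e pv k by move: H10; rewrite Eb /adjn Pa HA nat_bool_neq0.
    apply: run_if => [H11|H11].
    * apply: run_set => md Ed Fd; split; last lia.
      have F2' : edge_nat e k qv by move: H11; rewrite Ec /adjn Ab Qb nat_bool_neq0.
      split.
      -- apply: (base_frame HR _ Bc (W := [:: O])); first by rewrite /okW /= /O /rg; lia.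
         move=> x; rewrite inE; exact: Fd.
      -- by rewrite Fd // /P rg_eq; lia.
      -- by rewrite Fd // /Q rg_eq; lia.
      -- by rewrite Ed has_iotaS /f F1' F2' !orbT.
    * apply: run_skip; split; last lia.
      have F2' : edge_nat e k qv = false by move: H11; rewrite Ec /adjn Ab Qb => /nat_bool_eq0.
      split => //.
      by rewrite Oc Oa has_iotaS /f F2' andbF orbF.
  + apply: run_skip; split; last lia.
    have F1' : edge_nat e pv k = false by move: H10; rewrite Eb /adjn Pa HA => /nat_bool_eq0.
    split => //.
    by rewrite Ob Oa has_iotaS /f F1' andFb orbF.
- split => //.
  + by rewrite W6 // /= !inE /P !rg_eq; lia.
  + by rewrite W6 // /= !inE /Q !rg_eq; lia.
  + by rewrite E6 /= orbF.
move=> m' k _ [[_ _ _ Ok] Hk]; split.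
- rewrite /in2B; lia.
- by rewrite Ok /in2n -/pv -/qv.
Qed.

Definition in3n n (e : rel 'I_n) (p q : nat) : bool :=
  has (fun a => in2n e p a && ((a == q) || edge_nat e a q)) (iota 0 n).

Definition in3c R pa qa oa :=
  let P := rg R pa in let Q := rg R qa in let O := rg R oa in
  CSeq (CI (IConst O 0))
  (forc (ONE R) (rg R 15) (rg R 16)
    (CSeq (in2c R pa 15 17)
      (CIf (rg R 17)
         (CSeq (adjc R (rg R 15) Q (rg R 18))
           (CIf (rg R 18) (CI (IConst O 1))
             (CSeq (CI (ISub (rg R 19) (rg R 15) Q))
               (CIf (rg R 19) CSkip
                 (CSeq (CI (ISub (rg R 19) Q (rg R 15)))
                    (CIf (rg R 19) CSkip (CI (IConst O 1))))))))
         CSkip))).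

Definition in3B n := 1 + Bfor n (in2B n + 4 * n + 30).

Lemma in3c_spec n (e : rel 'I_n) l R pa qa oa m :
  symmetric e -> irreflexive e -> Rok n R ->
  19 < pa < 40 -> 19 < qa < 40 -> 19 < oa < 40 -> oa != pa -> oa != qa ->
  Base e l R m -> m (rg R pa) < n -> m (rg R qa) < n ->
  Run (in3c R pa qa oa) m
    (fun m' k => k <= in3B n /\ m' (rg R oa) = in3n e (m (rg R pa)) (m (rg R qa))).
Proof.
move=> Hs Hirr HR Hpa Hqa Hoa Hop Hoq HB Hp Hq.
set P := rg R pa; set Q := rg R qa; set O := rg R oa.
set pv := m P; set qv := m Q.
rewrite /in3c -/P -/Q -/O.
apply: run_seq; apply: run_set => m1 E1 F1.
have B1 : Base e l R m1.
  apply: (base_frame HR _ HB (W := [:: O])); first by rewrite /okW /= /O /rg; lia.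
  move=> x; rewrite inE; exact: F1.
pose g a := in2n e pv a && ((a == qv) || edge_nat e a qv).
pose Inv k (m : memory) := [/\ Base e l R m, m P = pv, m Q = qv & m O = has g (iota 0 k)].
apply: run_weaken (@run_for n (ONE R) (rg R 15) (rg R 16) (CSeq (in2c R pa 15 17)
      (CIf (rg R 17)
         (CSeq (adjc R (rg R 15) Q (rg R 18))
           (CIf (rg R 18) (CI (IConst O 1))
             (CSeq (CI (ISub (rg R 19) (rg R 15) Q))
               (CIf (rg R 19) CSkip
                 (CSeq (CI (ISub (rg R 19) Q (rg R 15)))
                    (CIf (rg R 19) CSkip (CI (IConst O 1))))))))
         CSkip)) m1 Inv (in2B n + 4 * n + 30) _ _ _ _ _ _ _ _ _ _) _ => //.
- by rewrite rg_eq.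
- by rewrite /ONE rg_eq.
- by rewrite /= /O !inE !rg_eq; lia.
- by rewrite /= /O !inE !rg_eq; lia.
- move=> k ma mb [Ba Pa Qa Oa] Hab; split.
  + apply: (base_frame HR _ Ba (W := [:: rg R 15; rg R 16])); first by rewrite /okW /= /rg; lia.
    move=> x; rewrite !inE negb_or => /andP[a b]; exact: Hab.
  + by rewrite Hab // /P rg_eq; lia.
  + by rewrite Hab // /Q rg_eq; lia.
  + by rewrite Hab // /O rg_eq; lia.
- by move=> k ma [Ba _ _ _]; apply: Base_regs Ba.
- move=> k ma Hk [Ba Pa Qa Oa] HA.
  apply: run_seq; apply: run_weaken (in2c_spec (pa := pa) (qa := 15) (oa := 17) Hs Hirr HR _ _ _ _ _ Ba _ _) _.
  + lia. + by []. + by []. + by rewrite eqE /=; lia. + by [].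
  + by rewrite Pa.
  + by rewrite HA.
  move=> mb kb Wb [Hkb Eb].
  have Bb : Base e l R mb by apply: (base_frame HR _ Ba Wb); rewrite /okW /= /rg; lia.
  have Pb : mb P = pv by rewrite Wb // /= !inE /P !rg_eq; lia.
  have Qb : mb Q = qv by rewrite Wb // /= !inE /Q !rg_eq; lia.
  have Ob : mb O = ma O by rewrite Wb // /= !inE /O !rg_eq; lia.
  have Ab : mb (rg R 15) = k by rewrite Wb // /= !inE !rg_eq.
  rewrite Pa HA in Eb.
  apply: run_if => [H17|H17]; last first.
    apply: run_skip; split; last lia.
    have G : g k = false by rewrite /g; move: H17; rewrite Eb => /nat_bool_eq0 ->.
    split => //. by rewrite Ob Oa has_iotaS G orbF.
  have G1 : in2n e pv k by move: H17; rewrite Eb nat_bool_neq0.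
  apply: run_seq; apply: run_weaken (adjc_spec (rg R 18) Hs Hirr HR Bb _ _ _ _) _.
  + by rewrite Ab.
  + by rewrite Qb.
  + by rewrite !inE !rg_eq.
  + by rewrite !inE /Q !rg_eq; lia.
  move=> mc kc Wc [Hkc Ec].
  have Bc : Base e l R mc by apply: (base_frame HR _ Bb Wc); rewrite /okW /= /rg; lia.
  have Pc : mc P = pv by rewrite Wc // /= !inE /P !rg_eq; lia.
  have Qc : mc Q = qv by rewrite Wc // /= !inE /Q !rg_eq; lia.
  have Oc : mc O = ma O by rewrite Wc // /= !inE /O !rg_eq; lia.
  have Ac : mc (rg R 15) = k by rewrite Wc // /= !inE !rg_eq.
  rewrite Ab Qb in Ec.
  have setO md (Ed : md O = 1) (Fd : forall x, x != O -> md x = mc x) (Gk : g k) :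
      Inv k.+1 md.
    split.
    -- apply: (base_frame HR _ Bc (W := [:: O])); first by rewrite /okW /= /O /rg; lia.
       move=> x; rewrite inE; exact: Fd.
    -- by rewrite Fd // /P rg_eq; lia.
    -- by rewrite Fd // /Q rg_eq; lia.
    -- by rewrite Ed has_iotaS Gk orbT.
  apply: run_if => [H18|H18].
    apply: run_set => md Ed Fd; split; last lia.
    apply: setO => //. by rewrite /g G1 /=; move: H18; rewrite Ec nat_bool_neq0 => ->; rewrite orbT.
  have E18 : edge_nat e k qv = false by move: H18; rewrite Ec => /nat_bool_eq0.
  apply: run_seq; apply: run_sub => md Ed Fd.
  have Bd : Base e l R md.
    apply: (base_frame HR _ Bc (W := [:: rg R 19])); first by rewrite /okW /= /rg; lia.
    move=> x; rewrite inE; exact: Fd.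
  apply: run_if => [H19|H19].
    apply: run_skip; split; last lia.
    have G : g k = false.
      rewrite /g G1 E18 orbF /=; move: H19; rewrite Ed Ac Qc.
      by move=> H; apply/negbTE/eqP => E; move: H; rewrite E subnn.
    split => //.
    + by rewrite Fd ?Pc // /P rg_eq; lia.
    + by rewrite Fd ?Qc // /Q rg_eq; lia.
    + by rewrite Fd ?Oc ?Oa ?has_iotaS ?G ?orbF // /O rg_eq; lia.
  apply: run_seq; apply: run_sub => mf Ef Ff.
  have Bf : Base e l R mf.
    apply: (base_frame HR _ Bd (W := [:: rg R 19])); first by rewrite /okW /= /rg; lia.
    move=> x; rewrite inE; exact: Ff.
  have Qd : md Q = qv by rewrite Fd ?Qc // /Q rg_eq; lia.
  have Ad : md (rg R 15) = k by rewrite Fd ?Ac // rg_eq.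
  apply: run_if => [H19'|H19'].
    apply: run_skip; split; last lia.
    have G : g k = false.
      rewrite /g G1 E18 orbF /=; move: H19'; rewrite Ef Ad Qd.
      by move=> H; apply/negbTE/eqP => E; move: H; rewrite E subnn.
    split => //.
    + by rewrite Ff ?Fd ?Pc // /P rg_eq; lia.
    + by rewrite Ff ?Qd // /Q rg_eq; lia.
    + by rewrite Ff ?Fd ?Oc ?Oa ?has_iotaS ?G ?orbF // /O rg_eq; lia.
  apply: run_set => mh Eh Fh; split; last lia.
  have Hkq : k = qv.
    move: H19 H19'; rewrite Ef Ad Qd Ed Ac Qc; lia.
  split.
  -- apply: (base_frame HR _ Bf (W := [:: O])); first by rewrite /okW /= /O /rg; lia.
     move=> x; rewrite inE; exact: Fh.
  -- by rewrite Fh ?Ff ?Fd ?Pc // /P rg_eq; lia.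
  -- by rewrite Fh ?Ff ?Qd // /Q rg_eq; lia.
  -- by rewrite Eh has_iotaS /g G1 Hkq eqxx orbT.
- split => //.
  + by rewrite F1 // /P rg_eq; lia.
  + by rewrite F1 // /Q rg_eq; lia.
move=> m' k _ [[_ _ _ Ok] Hk]; split.
- rewrite /in3B; lia.
- by rewrite Ok /in3n -/pv -/qv.
Qed.

Lemma count_iotaS (f : pred nat) k : count f (iota 0 k.+1) = count f (iota 0 k) + f k.
Proof. by rewrite -addn1 iotaD count_cat /= addn0. Qed.

Definition cntc R memc :=
  CSeq (CI (IConst (rg R 25) 0)) (CSeq (CI (IConst (rg R 26) 0))
  (forc (ONE R) (rg R 22) (rg R 23)
     (CSeq memc (CIf (rg R 24) (CI (IAdd (rg R 25) (rg R 25) (ONE R))) (CI (IConst (rg R 26) 1)))))).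

Lemma cntc_spec n (e : rel 'I_n) l R memc (f : nat -> bool) Bm pv m :
  Rok n R ->
  (forall m, Base e l R m -> m (rg R 20) = pv -> m (rg R 22) < n ->
     Run memc m (fun m' k => k <= Bm /\ m' (rg R 24) = f (m (rg R 22)))) ->
  okW R (writes memc) ->
  all (fun x => x \notin [:: rg R 20; rg R 22; rg R 23; rg R 25; rg R 26]) (writes memc) ->
  Base e l R m -> m (rg R 20) = pv ->
  Run (cntc R memc) m (fun m' k => [/\ k <= 2 + Bfor n (Bm + 3),
      m' (rg R 25) = count f (iota 0 n) & m' (rg R 26) = has (predC f) (iota 0 n)]).
Proof.
move=> HR Hmem Hok /allP Hw HB HP.
apply: run_seq; apply: run_set => m1 E1 F1.
apply: run_seq; apply: run_set => m2 E2 F2.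
have B2 : Base e l R m2.
  apply: (base_frame HR _ HB (W := [:: rg R 26; rg R 25])); first by rewrite /okW /= /rg; lia.
  move=> x; rewrite !inE negb_or => /andP[a b]; by rewrite F2 // F1.
pose Inv k (m : memory) := [/\ Base e l R m, m (rg R 20) = pv,
  m (rg R 25) = count f (iota 0 k) & m (rg R 26) = has (predC f) (iota 0 k)].
have Wm x : x \in writes memc -> x \notin [:: rg R 20; rg R 22; rg R 23; rg R 25; rg R 26] by apply: Hw.
apply: run_weaken (@run_for n (ONE R) (rg R 22) (rg R 23)
  (CSeq memc (CIf (rg R 24) (CI (IAdd (rg R 25) (rg R 25) (ONE R))) (CI (IConst (rg R 26) 1))))
  m2 Inv (Bm + 3) _ _ _ _ _ _ _ _ _ _) _ => //.
- by rewrite rg_eq.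
- by rewrite /ONE rg_eq.
- rewrite /= mem_cat negb_or; apply/andP; split; last by rewrite !inE !rg_eq.
  by apply/negP => /Wm; rewrite !inE eqxx !orbT.
- rewrite /= mem_cat negb_or; apply/andP; split; last by rewrite !inE !rg_eq.
  by apply/negP => /Wm; rewrite !inE eqxx !orbT.
- move=> k ma mb [Ba Pa Ca Ha] Hab; split.
  + apply: (base_frame HR _ Ba (W := [:: rg R 22; rg R 23])); first by rewrite /okW /= /rg; lia.
    move=> x; rewrite !inE negb_or => /andP[a b]; exact: Hab.
  + by rewrite Hab // rg_eq.
  + by rewrite Hab // rg_eq.
  + by rewrite Hab // rg_eq.
- by move=> k ma [Ba _ _ _]; apply: Base_regs Ba.
- move=> k ma Hk [Ba Pa Ca Ha] HQ.
  apply: run_seq; apply: run_weaken (Hmem ma Ba Pa _) _; first by rewrite HQ.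
  move=> mb kb Wb [Hkb Eb]; rewrite HQ in Eb.
  have Bb : Base e l R mb by apply: (base_frame HR Hok Ba Wb).
  have Keep x : x \in [:: rg R 20; rg R 22; rg R 23; rg R 25; rg R 26] -> mb x = ma x.
    move=> Hx; apply: Wb; apply/negP => /Wm; by rewrite Hx.
  apply: run_if => [H24|H24].
  + apply: run_add => mc Ec Fc; split; last lia.
    split.
    * apply: (base_frame HR _ Bb (W := [:: rg R 25])); first by rewrite /okW /= /rg; lia.
      move=> x; rewrite inE; exact: Fc.
    * by rewrite Fc ?rg_eq // Keep ?inE ?eqxx ?orbT.
    * rewrite Ec Keep ?inE ?eqxx ?orbT // count_iotaS Ca; move: H24; rewrite Eb nat_bool_neq0 => ->.
      have [_ Hb1 _] := Bb. by rewrite /ONE Hb1.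
    * rewrite Fc ?rg_eq // Keep ?inE ?eqxx ?orbT // Ha has_iotaS /=.
      by move: H24; rewrite Eb nat_bool_neq0 => ->; rewrite orbF.
  + apply: run_set => mc Ec Fc; split; last lia.
    have Ff : f k = false by move: H24; rewrite Eb => /nat_bool_eq0.
    split.
    * apply: (base_frame HR _ Bb (W := [:: rg R 26])); first by rewrite /okW /= /rg; lia.
      move=> x; rewrite inE; exact: Fc.
    * by rewrite Fc ?rg_eq // Keep ?inE ?eqxx ?orbT.
    * by rewrite Fc ?rg_eq // Keep ?inE ?eqxx ?orbT // count_iotaS Ff addn0.
    * by rewrite Ec has_iotaS /= Ff orbT.
- split => //.
  + by rewrite F2 ?rg_eq // F1 ?rg_eq.
  + by rewrite F2 ?rg_eq // E1.
move=> m' k _ [[_ _ Ck Hk'] Hk]; split => //; lia.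
Qed.

Lemma foldl_iotaS (T : Type) (g : T -> nat -> T) x k :
  foldl g x (iota 0 k.+1) = g (foldl g x (iota 0 k)) k.
Proof. by rewrite -addn1 iotaD foldl_cat. Qed.

Definition finalc R :=
  CSeq (CI (ISub (rg R 29) 1 (rg R 28))) (CIf (rg R 29) (CI (IConst 0 0)) (CI (IConst 0 1))).

Lemma finalc_spec R m l b :
  m 1 = l -> m (rg R 28) = b ->
  Run (finalc R) m (fun m' k => k <= 4 /\ (m' 0 != 0) = (l <= b)).
Proof.
move=> H1 Hb.
apply: run_seq; apply: run_sub => m1 E1 F1.
apply: run_if => [H|H].
- apply: run_set => m2 E2 F2; split => //; rewrite E2 /=.
  by move: H; rewrite E1 H1 Hb -subn_eq0 => /negbTE ->.
- apply: run_set => m2 E2 F2; split => //; rewrite E2 /=.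
  by move: H; rewrite E1 H1 Hb -subn_eq0 => ->.
Qed.

Definition cnt2 n (e : rel 'I_n) p := count (in2n e p) (iota 0 n).
Definition far2 n (e : rel 'I_n) p := has (predC (in2n e p)) (iota 0 n).
Definition best2 n (e : rel 'I_n) k :=
  foldl (fun b p => if far2 e p then maxn b (cnt2 e p) else b) 0 (iota 0 k).
Definition ans2 n (e : rel 'I_n) := if has (far2 e) (iota 0 n) then best2 e n else n.

Definition main2 R :=
  CSeq (CI (IConst (rg R 28) 0)) (CSeq (CI (IConst (rg R 27) 0)) (CSeq
  (forc (ONE R) (rg R 20) (rg R 21) (CSeq (cntc R (in2c R 20 22 24))
     (CIf (rg R 26) (CSeq (CI (IConst (rg R 27) 1)) (CSeq (CI (ISub (rg R 29) (rg R 25) (rg R 28)))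
        (CIf (rg R 29) (mov R (rg R 28) (rg R 25)) CSkip))) CSkip)))
  (CSeq (CIf (rg R 27) CSkip (CI (IAdd (rg R 28) 0 (rg R 0)))) (finalc R)))).

Definition main2B n := 10 + Bfor n (2 + Bfor n (in2B n + 3) + 10).

Lemma main2_spec n (e : rel 'I_n) l R m :
  symmetric e -> irreflexive e -> Rok n R -> Base e l R m ->
  Run (main2 R) m (fun m' k => k <= main2B n /\ (m' 0 != 0) = (l <= ans2 e)).
Proof.
move=> Hs Hirr HR HB.
apply: run_seq; apply: run_set => m1 E1 F1.
apply: run_seq; apply: run_set => m2 E2 F2.
have B2 : Base e l R m2.
  apply: (base_frame HR _ HB (W := [:: rg R 27; rg R 28])); first by rewrite /okW /= /rg; lia.
  move=> x; rewrite !inE negb_or => /andP[a b]; by rewrite F2 // F1.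
pose Inv k (m : memory) := [/\ Base e l R m, m (rg R 28) = best2 e k & m (rg R 27) = has (far2 e) (iota 0 k)].
apply: run_seq.
apply: run_weaken (@run_for n (ONE R) (rg R 20) (rg R 21)
  (CSeq (cntc R (in2c R 20 22 24))
     (CIf (rg R 26) (CSeq (CI (IConst (rg R 27) 1)) (CSeq (CI (ISub (rg R 29) (rg R 25) (rg R 28)))
        (CIf (rg R 29) (mov R (rg R 28) (rg R 25)) CSkip))) CSkip))
  m2 Inv (2 + Bfor n (in2B n + 3) + 10) _ _ _ _ _ _ _ _ _ _) _ => //.
- by rewrite rg_eq.
- by rewrite /ONE rg_eq.
- by rewrite /= !inE !rg_eq.
- by rewrite /= !inE !rg_eq.
- move=> k ma mb [Ba Ca Ha] Hab; split.
  + apply: (base_frame HR _ Ba (W := [:: rg R 20; rg R 21])); first by rewrite /okW /= /rg; lia.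
    move=> x; rewrite !inE negb_or => /andP[a b]; exact: Hab.
  + by rewrite Hab // rg_eq.
  + by rewrite Hab // rg_eq.
- by move=> k ma [Ba _ _]; apply: Base_regs Ba.
- move=> k ma Hk [Ba Ca Ha] HP.
  apply: run_seq.
  apply: run_weaken (@cntc_spec n e l R (in2c R 20 22 24) (in2n e k) (in2B n) k ma HR _ _ _ Ba HP) _.
  + move=> mx Bx Px Qx.
    apply: run_weaken (in2c_spec (pa := 20) (qa := 22) (oa := 24) Hs Hirr HR _ _ _ _ _ Bx _ Qx) _ => //.
    * by rewrite Px.
    * by move=> ? ? _; rewrite Px.
  + by rewrite /okW /= /rg; lia.
  + by rewrite /= !inE !rg_eq.
  move=> mb kb Wb [Hkb Cb Hb].
  have Bb : Base e l R mb.
    apply: (base_frame HR _ Ba Wb); by rewrite /okW /= /rg; lia.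
  have Keep x : x \in [:: rg R 27; rg R 28] -> mb x = ma x.
    move=> Hx; apply: Wb; move: Hx; rewrite /= !inE => /orP[] /eqP ->; by rewrite !rg_eq.
  apply: run_if => [H26|H26].
  + have Hfar : far2 e k by move: H26; rewrite Hb nat_bool_neq0.
    apply: run_seq; apply: run_set => mc Ec Fc.
    apply: run_seq; apply: run_sub => md Ed Fd.
    have Bd : Base e l R md.
      apply: (base_frame HR _ Bb (W := [:: rg R 29; rg R 27])); first by rewrite /okW /= /rg; lia.
      move=> x; rewrite !inE negb_or => /andP[a b]; by rewrite Fd // Fc.
    have Cd : md (rg R 25) = cnt2 e k by rewrite Fd ?rg_eq // Fc ?rg_eq.
    have Cc : mc (rg R 25) = cnt2 e k by rewrite Fc ?rg_eq.
    have Bc : mc (rg R 28) = best2 e k by rewrite Fc ?rg_eq // Keep ?inE ?eqxx ?orbT.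
    have Bestd : md (rg R 28) = best2 e k by rewrite Fd ?rg_eq // Fc ?rg_eq // Keep ?inE ?eqxx ?orbT.
    have Fld : md (rg R 27) = 1 by rewrite Fd ?rg_eq.
    have Inv1 mx b : Base e l R mx -> mx (rg R 28) = b -> mx (rg R 27) = 1 -> b = best2 e k.+1 ->
        Inv k.+1 mx.
      move=> Bx Bbx Fx Eb; split => //; first by rewrite Bbx Eb.
      by rewrite Fx has_iotaS Hfar orbT.
    apply: run_if => [H29|H29].
    * apply: run_add => mf Ef Ff; split; last lia.
      have Bf : Base e l R mf.
        apply: (base_frame HR _ Bd (W := [:: rg R 28])); first by rewrite /okW /= /rg; lia.
        move=> x; rewrite inE; exact: Ff.
      have E28 : mf (rg R 28) = cnt2 e k by rewrite Ef Cd; have [-> _ _] := Bd; rewrite addn0.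
      have F27 : mf (rg R 27) = 1 by rewrite Ff ?rg_eq.
      apply: (Inv1 mf (cnt2 e k) Bf E28 F27).
      rewrite /best2 foldl_iotaS -/(best2 e k) Hfar.
      move: H29; rewrite Ed Cc Bc subn_eq0 -ltnNge => H. by rewrite /maxn H.
    * apply: run_skip; split; last lia.
      apply: (Inv1 _ (best2 e k)) => //.
      rewrite /best2 foldl_iotaS -/(best2 e k) Hfar.
      move: H29; rewrite Ed Cc Bc => /eqP; rewrite subn_eq0 => H.
      by rewrite /maxn ltnNge H.
  + apply: run_skip; split; last lia.
    have Hfar : far2 e k = false by move: H26; rewrite Hb => /nat_bool_eq0.
    split => //.
    * by rewrite Keep ?inE ?eqxx ?orbT // Ca /best2 foldl_iotaS Hfar.
    * by rewrite Keep ?inE ?eqxx ?orbT // Ha has_iotaS Hfar orbF.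
- split => //; first by rewrite F2 ?rg_eq // E1.
move=> m3 k3 W3 [[B3 Best3 Fl3] Hk3].
have [HZ3 H13 [Hn3 Hl3 _]] := B3.
apply: run_seq.
apply: run_weaken (_ : Run (CIf (rg R 27) CSkip (CI (IAdd (rg R 28) 0 (rg R 0)))) m3
  (fun m4 k4 => k4 <= 2 /\ m4 1 = l /\ m4 (rg R 28) = ans2 e)) _.
  apply: run_if => [H27|H27].
  - apply: run_skip; split => //; split => //.
    by rewrite Best3 /ans2; move: H27; rewrite Fl3 nat_bool_neq0 => ->.
  - apply: run_add => m4 E4 F4; split => //; split; first by rewrite F4.
    rewrite E4 Hn3 HZ3 addn0 /ans2; by move: H27; rewrite Fl3 => /nat_bool_eq0 ->.
move=> m4 k4 _ [Hk4 [H14 B4]].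
apply: run_weaken (finalc_spec H14 B4) _ => m5 k5 _ [Hk5 ->]; split => //.
rewrite /main2B; lia.
Qed.

Definition best3 n (e : rel 'I_n) k :=
  foldl (fun b p => maxn b (count (in3n e p) (iota 0 n))) 0 (iota 0 k).

Definition main3 R :=
  CSeq (CI (IConst (rg R 28) 0)) (CSeq
  (forc (ONE R) (rg R 20) (rg R 21) (CSeq (cntc R (in3c R 20 22 24))
     (CSeq (CI (ISub (rg R 29) (rg R 25) (rg R 28)))
        (CIf (rg R 29) (mov R (rg R 28) (rg R 25)) CSkip))))
  (finalc R)).

Definition main3B n := 10 + Bfor n (2 + Bfor n (in3B n + 3) + 10).

Lemma main3_spec n (e : rel 'I_n) l R m :
  symmetric e -> irreflexive e -> Rok n R -> Base e l R m ->
  Run (main3 R) m (fun m' k => k <= main3B n /\ (m' 0 != 0) = (l <= best3 e n)).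
Proof.
move=> Hs Hirr HR HB.
apply: run_seq; apply: run_set => m2 E2 F2.
have B2 : Base e l R m2.
  apply: (base_frame HR _ HB (W := [:: rg R 28])); first by rewrite /okW /= /rg; lia.
  move=> x; rewrite !inE => a; by rewrite F2.
pose Inv k (m : memory) := Base e l R m /\ m (rg R 28) = best3 e k.
apply: run_seq.
apply: run_weaken (@run_for n (ONE R) (rg R 20) (rg R 21)
  (CSeq (cntc R (in3c R 20 22 24))
     (CSeq (CI (ISub (rg R 29) (rg R 25) (rg R 28)))
        (CIf (rg R 29) (mov R (rg R 28) (rg R 25)) CSkip)))
  m2 Inv (2 + Bfor n (in3B n + 3) + 10) _ _ _ _ _ _ _ _ _ _) _ => //.
- by rewrite rg_eq.
- by rewrite /ONE rg_eq.
- by rewrite /= !inE !rg_eq.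
- by rewrite /= !inE !rg_eq.
- move=> k ma mb [Ba Ca] Hab; split.
  + apply: (base_frame HR _ Ba (W := [:: rg R 20; rg R 21])); first by rewrite /okW /= /rg; lia.
    move=> x; rewrite !inE negb_or => /andP[a b]; exact: Hab.
  + by rewrite Hab // rg_eq.
- by move=> k ma [Ba _]; apply: Base_regs Ba.
- move=> k ma Hk [Ba Ca] HP.
  apply: run_seq.
  apply: run_weaken (@cntc_spec n e l R (in3c R 20 22 24) (in3n e k) (in3B n) k ma HR _ _ _ Ba HP) _.
  + move=> mx Bx Px Qx.
    apply: run_weaken (in3c_spec (pa := 20) (qa := 22) (oa := 24) Hs Hirr HR _ _ _ _ _ Bx _ Qx) _ => //.
    * by rewrite Px.
    * by move=> ? ? _; rewrite Px.
  + by rewrite /okW /= /rg; lia.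
  + by rewrite /= !inE !rg_eq.
  move=> mb kb Wb [Hkb Cb Hb].
  have Bb : Base e l R mb.
    apply: (base_frame HR _ Ba Wb); by rewrite /okW /= /rg; lia.
  have B28 : mb (rg R 28) = best3 e k.
    by rewrite Wb ?Ca //; apply/negP; rewrite /= !inE !rg_eq.
  apply: run_seq; apply: run_sub => mc Ec Fc.
  have Bc : Base e l R mc.
    apply: (base_frame HR _ Bb (W := [:: rg R 29])); first by rewrite /okW /= /rg; lia.
    move=> x; rewrite inE; exact: Fc.
  rewrite Cb B28 in Ec.
  apply: run_if => [H29|H29].
  + apply: run_add => mf Ef Ff; split; last lia.
    split.
    * apply: (base_frame HR _ Bc (W := [:: rg R 28])); first by rewrite /okW /= /rg; lia.
      move=> x; rewrite inE; exact: Ff.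
    * rewrite Ef Fc ?rg_eq // Cb; have [-> _ _] := Bc; rewrite addn0.
      rewrite /best3 foldl_iotaS -/(best3 e k).
      move: H29; rewrite Ec subn_eq0 -ltnNge => H. by rewrite /maxn H.
  + apply: run_skip; split; last lia.
    split => //.
    rewrite Fc ?rg_eq // B28 /best3 foldl_iotaS -/(best3 e k).
    move: H29; rewrite Ec => /eqP; rewrite subn_eq0 => H.
    by rewrite /maxn ltnNge H.
move=> m3 k3 W3 [[B3 Best3] Hk3].
have [HZ3 H13 [Hn3 Hl3 _]] := B3.
apply: run_weaken (finalc_spec Hl3 Best3) _ => m5 k5 _ [Hk5 ->]; split => //.
rewrite /main3B; lia.
Qed.


Lemma cnt_card n (P : pred 'I_n) : count P (enum 'I_n) = #|P|.
Proof.
rewrite cardE -size_filter /enum_mem (@eq_filter _ (mem 'I_n) predT) // filter_predT.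
by congr size; apply: eq_filter.
Qed.

Lemma count_iota_card n (f : pred nat) : count f (iota 0 n) = #|[pred x : 'I_n | f x]|.
Proof. by rewrite -val_enum_ord count_map -cnt_card. Qed.

Lemma has_iota_ex n (f : pred nat) : has f (iota 0 n) = [exists x : 'I_n, f x].
Proof.
rewrite -val_enum_ord has_map; apply/hasP/existsP => [[x _ Hx]|[x Hx]]; first by exists x.
by exists x => //; rewrite mem_enum.
Qed.

Lemma edge_natE n (e : rel 'I_n) (x y : 'I_n) : edge_nat e x y = e x y.
Proof. by rewrite /edge_nat !valK. Qed.

Definition fm (c : pred nat) (g : nat -> nat) k :=
  foldl (fun b p => if c p then maxn b (g p) else b) 0 (iota 0 k).

Lemma fmS (c : pred nat) g k : fm c g k.+1 = if c k then maxn (fm c g k) (g k) else fm c g k.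
Proof. by rewrite /fm foldl_iotaS. Qed.

Lemma fm_ub (c : pred nat) g k p : p < k -> c p -> g p <= fm c g k.
Proof.
elim: k => // k IH; rewrite ltnS leq_eqVlt => /orP[/eqP -> Hc|Hp Hc].
- by rewrite fmS Hc leq_maxr.
- rewrite fmS; case: (c k); last exact: IH.
  exact: leq_trans (IH Hp Hc) (leq_maxl _ _).
Qed.

Lemma fm_att (c : pred nat) g k : has c (iota 0 k) -> exists2 p, p < k & c p /\ fm c g k = g p.
Proof.
elim: k => // k IH; rewrite has_iotaS fmS.
case Hk: (c k); last first.
  rewrite orbF => /IH [p Hp Hpp]; exists p => //; exact: ltnW.
move=> _; case Hh: (has c (iota 0 k)).
- have [p Hp [Hcp Hfm]] := IH Hh.
  rewrite /maxn; case: ltnP => H.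
  + by exists k.
  + by exists p; [exact: ltnW|rewrite Hfm].
- have Hz : fm c g k = 0.
    move/negbT: Hh; elim: k {IH Hk} => // k IH; rewrite has_iotaS negb_or => /andP[H1 H2].
    by rewrite fmS (negbTE H2) IH.
  by exists k => //; rewrite Hz max0n.
Qed.

Definition in2 n (e : rel 'I_n) (x y : 'I_n) : bool :=
  [|| x == y, e x y | [exists a, e x a && e a y]].

Definition in3 n (e : rel 'I_n) (x y : 'I_n) : bool :=
  [exists a, in2 e x a && ((a == y) || e a y)].

Lemma in2nE n (e : rel 'I_n) (x y : 'I_n) : in2n e x y = in2 e x y.
Proof.
rewrite /in2n /in2 edge_natE has_iota_ex; congr [|| _, _ | _].
by apply: eq_existsb => a; rewrite !edge_natE.
Qed.

Lemma in3nE n (e : rel 'I_n) (x y : 'I_n) : in3n e x y = in3 e x y.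
Proof.
rewrite /in3n /in3 has_iota_ex; apply: eq_existsb => a.
by rewrite in2nE edge_natE.
Qed.

Lemma dist_nil n (e : rel 'I_n) (S : {set 'I_n}) s u : dist_le_in e S s u u.
Proof. by exists [::]. Qed.

Lemma dist_one n (e : rel 'I_n) (S : {set 'I_n}) s u v : 0 < s -> e u v -> v \in S -> dist_le_in e S s u v.
Proof. by move=> Hs Huv Hv; exists [:: v]; rewrite /= Huv Hv. Qed.

Lemma dist_two n (e : rel 'I_n) (S : {set 'I_n}) s u a v : 1 < s -> e u a -> e a v -> a \in S -> v \in S ->
  dist_le_in e S s u v.
Proof. by move=> Hs H1 H2 Ha Hv; exists [:: a; v]; rewrite /= H1 H2 Ha Hv. Qed.

Lemma dist_three n (e : rel 'I_n) (S : {set 'I_n}) s u a b v : 2 < s -> e u a -> e a b -> e b v ->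
  a \in S -> b \in S -> v \in S -> dist_le_in e S s u v.
Proof. by move=> Hs H1 H2 H3 Ha Hb Hv; exists [:: a; b; v]; rewrite /= H1 H2 H3 Ha Hb Hv. Qed.

Lemma dist2_inv n (e : rel 'I_n) (S : {set 'I_n}) u v : dist_le_in e S 2 u v ->
  [\/ u = v, e u v | exists2 a, a \in S & e u a && e a v].
Proof.
case=> [[|x [|y [|z p]]]] [/= Hall Hp Hl Hs].
- by apply: Or31.
- by apply: Or32; rewrite -Hl; move: Hp; rewrite andbT.
- apply: Or33; exists x; first by move: Hall => /and3P[].
  by rewrite -Hl; move: Hp => /and3P[-> -> _].
- by [].
Qed.

Lemma indep3 n (e : rel 'I_n) (x y z : 'I_n) :
  irreflexive e -> indep_number_le2 e ->
  x != y -> x != z -> y != z -> ~~ e x y -> ~~ e x z -> ~~ e y z -> symmetric e -> False.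
Proof.
move=> Hirr Hind Hxy Hxz Hyz Exy Exz Eyz Hs.
have HI : independent e [set x; y; z].
  move=> u v; rewrite !inE -!orbA => /or3P[] /eqP -> /or3P[] /eqP ->;
    rewrite ?Hirr ?Exy ?Exz ?Eyz // Hs ?Exy ?Exz ?Eyz //.
have := Hind _ HI.
have -> : [set x; y; z] = z |: [set x; y].
  by apply/setP => w; rewrite !inE; case: (w == x); case: (w == y); case: (w == z).
by rewrite cardsU1 !inE negb_or eq_sym Hxz eq_sym Hyz cards2 Hxy.
Qed.

Lemma in2_sym n (e : rel 'I_n) x y : symmetric e -> in2 e x y = in2 e y x.
Proof.
move=> Hs; rewrite /in2 (eq_sym x y) (Hs x y).
have -> : [exists a, e x a && e a y] = [exists a, e y a && e a x].
  by apply/existsP/existsP => [[a /andP[h1 h2]]|[a /andP[h1 h2]]]; exists a; rewrite Hs h2 Hs h1.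
by [].
Qed.

Lemma dist2_sym n (e : rel 'I_n) (S : {set 'I_n}) a b : symmetric e -> a \in S ->
  dist_le_in e S 2 a b -> dist_le_in e S 2 b a.
Proof.
move=> Hs Ha /dist2_inv [->|Hab|[c Hc /andP[h1 h2]]].
- exact: dist_nil.
- by apply: dist_one => //; rewrite Hs.
- by apply: (dist_two (a := c)) => //; rewrite Hs.
Qed.

Definition Np n (e : rel 'I_n) p x := (x == p) || e p x.

Lemma far_cover n (e : rel 'I_n) p q w : symmetric e -> irreflexive e -> indep_number_le2 e ->
  ~~ in2 e p q -> Np e p w || Np e q w.
Proof.
move=> Hs Hirr Hind; rewrite /in2 /Np !negb_or => /and3P[Hpq Epq _].
apply/negPn/negP; rewrite !negb_or => /andP[/andP[Hwp Epw] /andP[Hwq Eqw]].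
apply: (indep3 (x := p) (y := q) (z := w)) => //; by rewrite eq_sym.
Qed.

Lemma far_clique n (e : rel 'I_n) p q x y : symmetric e -> irreflexive e -> indep_number_le2 e ->
  ~~ in2 e p q -> Np e p x -> Np e p y -> x != y -> e x y.
Proof.
move=> Hs Hirr Hind Hf; rewrite /Np.
have [Hpq Epq Hc] : [/\ p != q, ~~ e p q & forall a, e p a -> e a q -> False].
  move: Hf; rewrite /in2 !negb_or => /and3P[-> -> Hex]; split => // a h1 h2.
  by move/existsP: Hex; apply; exists a; rewrite h1 h2.
case/orP => [/eqP ->|Hx]; case/orP => [/eqP ->|Hy] //.
- by rewrite eqxx.
- by move=> _; rewrite Hs.
- move=> Hxy; apply/negPn/negP => Exy.
  have Hxq : x != q by apply/eqP => Ex; move: Epq; rewrite -Ex Hx.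
  have Hyq : y != q by apply/eqP => Ey; move: Epq; rewrite -Ey Hy.
  have Exq : ~~ e x q by apply/negP => E; exact: (Hc x).
  have Eyq : ~~ e y q by apply/negP => E; exact: (Hc y).
  exact: (indep3 (x := x) (y := y) (z := q)).
Qed.

Definition B2 n (e : rel 'I_n) p := [set y | in2 e p y].

Lemma far_key n (e : rel 'I_n) p q a b : symmetric e -> irreflexive e -> indep_number_le2 e ->
  ~~ in2 e p q -> a \in B2 e p -> b \in B2 e p -> ~~ Np e p b -> dist_le_in e (B2 e p) 2 a b.
Proof.
move=> Hs Hirr Hind Hf Ha Hb Nb.
have Hf' : ~~ in2 e q p by rewrite in2_sym.
have [c Hpc Hcb] : exists2 c, e p c & e c b.
  move: Hb Nb; rewrite inE /in2 /Np => /or3P[/eqP ->|->|/existsP[c /andP[h1 h2]]].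
  - by rewrite eqxx.
  - by rewrite orbT.
  - by move=> _; exists c.
have Hc : c \in B2 e p by rewrite inE /in2 Hpc orbT.
have Npc : Np e p c by rewrite /Np Hpc orbT.
case Na: (Np e p a).
- move: (Na); rewrite /Np => /orP[/eqP ->|Hpa]; first exact: (dist_two (a := c)).
  case: (eqVneq a c) => [->|Hac]; first exact: dist_one.
  apply: (dist_two (a := c)) => //; exact: (far_clique (p := p) (q := q)).
- have Qa : Np e q a by move: (far_cover a Hs Hirr Hind Hf); rewrite Na.
  have Qb : Np e q b by move: (far_cover b Hs Hirr Hind Hf); rewrite (negbTE Nb).
  case: (eqVneq a b) => [->|Hab]; first exact: dist_nil.
  apply: dist_one => //; exact: (far_clique (p := q) (q := p)).
Qed.

Lemma far_club n (e : rel 'I_n) p q : symmetric e -> irreflexive e -> indep_number_le2 e ->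
  ~~ in2 e p q -> is_sclub e 2 (B2 e p).
Proof.
move=> Hs Hirr Hind Hf a b Ha Hb.
case Nb: (Np e p b); last exact: (far_key Hs Hirr Hind Hf Ha Hb (negbT Nb)).
case Na: (Np e p a).
  case: (eqVneq a b) => [->|Hab]; first exact: dist_nil.
  apply: dist_one => //; exact: (far_clique (p := p) (q := q)).
by apply: dist2_sym => //; exact: (far_key Hs Hirr Hind Hf Hb Ha (negbT Na)).
Qed.

Lemma far_bound n (e : rel 'I_n) p q (S : {set 'I_n}) :
  symmetric e -> irreflexive e -> indep_number_le2 e ->
  ~~ in2 e p q -> is_sclub e 2 S -> (#|S| <= #|B2 e p|) || (#|S| <= #|B2 e q|).
Proof.
move=> Hs Hirr Hind Hf HS.
have [Hpq Epq Hc] : [/\ p != q, ~~ e p q & forall a, e p a -> e a q -> False].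
  move: Hf; rewrite /in2 !negb_or => /and3P[-> -> Hex]; split => // a h1 h2.
  by move/existsP: Hex; apply; exists a; rewrite h1 h2.
case: (boolP [forall y in S, Np e p y || [exists x in S, Np e p x && e x y]]) => [/forall_inP H|].
- apply/orP; left; apply: subset_leq_card; apply/subsetP => y Hy; rewrite inE /in2.
  case/orP: (H y Hy) => [|/exists_inP[x Hx /andP[Nx Exy]]].
    by rewrite /Np => /orP[/eqP ->|->]; rewrite ?eqxx ?orbT.
  move: Nx; rewrite /Np => /orP[/eqP Exp|Epx].
  + by rewrite -Exp Exy orbT.
  + by apply/orP; right; apply/orP; right; apply/existsP; exists x; rewrite Epx Exy.
- rewrite negb_forall_in => /exists_inP[y0 Hy0]; rewrite negb_or => /andP[Ny0 Hno].
  apply/orP; right; apply: subset_leq_card; apply/subsetP => z Hz; rewrite inE.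
  case Qz: (Np e q z).
    by move: Qz; rewrite /Np /in2 => /orP[/eqP ->|->]; rewrite ?eqxx ?orbT.
  have Pz : Np e p z by move: (far_cover z Hs Hirr Hind Hf); rewrite Qz orbF.
  have Hzy : z != y0 by apply/eqP => E; move: Ny0; rewrite -E Pz.
  have Ezy : ~~ e z y0 by apply/negP => E; move/exists_inP: Hno; apply; exists z => //; rewrite Pz E.
  case/dist2_inv: (HS z y0 Hz Hy0) => [E|E|[w Hw /andP[Ezw Ewy]]].
  + by move: Hzy; rewrite E eqxx.
  + by move: Ezy; rewrite E.
  have Pw : ~~ Np e p w.
    apply/negP => Pw; move/exists_inP: Hno; apply; by exists w => //; rewrite Pw Ewy.
  have Qw : Np e q w by move: (far_cover w Hs Hirr Hind Hf); rewrite (negbTE Pw).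
  move: Qw; rewrite /Np => /orP[/eqP Ewq|Eqw].
  + by move: Qz; rewrite /Np -Ewq Hs Ezw orbT.
  + by rewrite /in2; apply/orP; right; apply/orP; right; apply/existsP; exists w; rewrite Eqw Hs Ezw.
Qed.

Lemma all_club n (e : rel 'I_n) : (forall x y, in2 e x y) -> is_sclub e 2 [set: 'I_n].
Proof.
move=> H a b _ _; move: (H a b); rewrite /in2 => /or3P[/eqP ->|E|/existsP[c /andP[h1 h2]]].
- exact: dist_nil.
- by apply: dist_one; rewrite ?inE.
- by apply: (dist_two (a := c)); rewrite ?inE.
Qed.

Lemma cnt2E n (e : rel 'I_n) (x : 'I_n) : cnt2 e x = #|B2 e x|.
Proof. rewrite /cnt2 count_iota_card; apply: eq_card => y; by rewrite !inE in2nE. Qed.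

Lemma far2E n (e : rel 'I_n) (x : 'I_n) : far2 e x = [exists y, ~~ in2 e x y].
Proof. rewrite /far2 has_iota_ex; apply: eq_existsb => y; by rewrite /= in2nE. Qed.

Theorem two_iff n (e : rel 'I_n) l : symmetric e -> irreflexive e -> indep_number_le2 e ->
  sclub_yes e 2 l <-> l <= ans2 e.
Proof.
move=> Hs Hirr Hind; rewrite /ans2.
have Hb : best2 e n = fm (far2 e) (cnt2 e) n by [].
split.
- case=> S [HlS HS]; apply: (leq_trans HlS).
  case: ifP => Hh.
  + move: Hh; rewrite has_iota_ex => /existsP[p Hp]; move: (Hp); rewrite far2E => /existsP[q Hq].
    have Hq' : far2 e q by rewrite far2E; apply/existsP; exists p; rewrite in2_sym.
    rewrite Hb; case/orP: (far_bound Hs Hirr Hind Hq HS) => H; apply: (leq_trans H);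
      rewrite -cnt2E; apply: fm_ub => //.
  + by have := max_card S; rewrite card_ord.
- case: ifP => Hh Hl.
  + have [p Hp [Hfp Hfm]] := fm_att (cnt2 e) Hh.
    pose x := Ordinal Hp.
    have Hfx : far2 e x by [].
    move: (Hfx); rewrite far2E => /existsP[q Hq].
    exists (B2 e x); split; last exact: (far_club Hs Hirr Hind Hq).
    by rewrite -cnt2E; move: Hl; rewrite Hb Hfm.
  + exists [set: 'I_n]; split; first by rewrite cardsT card_ord.
    apply: all_club => x y; apply/negPn/negP => Hxy.
    move/negbT: Hh; rewrite has_iota_ex => /existsP; apply; exists x.
    by rewrite far2E; apply/existsP; exists y.
Qed.

Lemma in3_closed n (e : rel 'I_n) x w z : symmetric e -> irreflexive e -> indep_number_le2 e ->
  in3 e x w -> e w z -> in3 e x z.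
Proof.
move=> Hs Hirr Hind Hw Ewz.
case Hxw: (in2 e x w).
  by apply/existsP; exists w; rewrite Hxw Ewz orbT.
move/existsP: Hw => [a /andP[Hxa /orP[/eqP Eaw|Eaw]]]; first by move: Hxw; rewrite -Eaw Hxa.
case Hxz: (in2 e x z); first by apply/existsP; exists z; rewrite Hxz eqxx.
case Eaz: (e a z); first by apply/existsP; exists a; rewrite Hxa Eaz orbT.
exfalso.
have Hxa1 : x != a by apply/eqP => E; move: Hxw; rewrite /in2 E Eaw orbT.
have Exa : ~~ e x a.
  by apply/negP => E; move: Hxw; rewrite /in2; move/negbT; rewrite !negb_or => /and3P[_ _ /existsP[]]; exists a; rewrite E Eaw.
have Hxz1 : x != z by apply/eqP => E; move: Hxz; rewrite /in2 E eqxx.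
have Haz : a != z by apply/eqP => E; move: Hxz; rewrite -E Hxa.
have Exz : ~~ e x z by apply/negP => E; move: Hxz; rewrite /in2 E orbT.
exact: (indep3 (x := x) (y := a) (z := z) Hirr Hind Hxa1 Hxz1 Haz Exa Exz (negbT Eaz)).
Qed.

Lemma in3_refl n (e : rel 'I_n) x : in3 e x x.
Proof. by apply/existsP; exists x; rewrite /in2 eqxx. Qed.

Lemma in3_of2 n (e : rel 'I_n) x y : in2 e x y -> in3 e x y.
Proof. by move=> H; apply/existsP; exists y; rewrite H eqxx. Qed.

Lemma in3_path n (e : rel 'I_n) u : symmetric e -> irreflexive e -> indep_number_le2 e ->
  forall p w, in3 e u w -> path e w p -> in3 e u (last w p).
Proof.
move=> Hs Hirr Hind; elim=> //= x p IH w Hw /andP[Ewx Hp].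
apply: IH Hp; exact: in3_closed Hw Ewx.
Qed.

Lemma in3_sym n (e : rel 'I_n) x y : symmetric e -> in3 e x y -> in3 e y x.
Proof.
move=> Hs /existsP[c /andP[Hxc /orP[/eqP Ecy|Ecy]]].
- by apply: in3_of2; rewrite in2_sym // -Ecy.
- move: Hxc; rewrite /in2 => /or3P[/eqP Exc|Exc|/existsP[d /andP[Exd Edc]]].
  + by apply: in3_of2; rewrite /in2 Hs Exc Ecy orbT.
  + apply/existsP; exists c; rewrite /in2 Hs Ecy orbT /=; by rewrite Hs Exc orbT.
  + apply/existsP; exists d; rewrite Hs Exd orbT andbT.
    by rewrite /in2; apply/orP; right; apply/orP; right; apply/existsP; exists c; rewrite Hs Ecy Hs Edc.
Qed.

Lemma in3_trans n (e : rel 'I_n) a u b : symmetric e -> irreflexive e -> indep_number_le2 e ->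
  in3 e a u -> in3 e u b -> in3 e a b.
Proof.
move=> Hs Hirr Hind Hau /existsP[c /andP[Huc Hcb]].
have Hac : in3 e a c.
  move: Huc; rewrite /in2 => /or3P[/eqP <-|Euc|/existsP[d /andP[Eud Edc]]] //.
  - exact: in3_closed Hau Euc.
  - exact: in3_closed (in3_closed Hs Hirr Hind Hau Eud) Edc.
move: Hcb => /orP[/eqP <-|Ecb] //; exact: in3_closed Hac Ecb.
Qed.

Definition B3 n (e : rel 'I_n) u := [set y | in3 e u y].

Lemma B3_club n (e : rel 'I_n) u s : symmetric e -> irreflexive e -> indep_number_le2 e ->
  2 < s -> is_sclub e s (B3 e u).
Proof.
move=> Hs Hirr Hind Hs3 a b; rewrite !inE => Ha Hb.
have Hcl v w : in3 e u v -> e v w -> w \in B3 e u by move=> H1 H2; rewrite inE; exact: in3_closed H1 H2.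
have /existsP[c /andP[Hac Hcb]] := in3_trans Hs Hirr Hind (in3_sym Hs Ha) Hb.
move: Hac; rewrite /in2 => /or3P[/eqP Eac|Eac|/existsP[d /andP[Ead Edc]]].
- move: Hcb => /orP[/eqP Ecb|Ecb]; first by rewrite -Ecb -Eac; exact: dist_nil.
  apply: dist_one; [lia | by rewrite Eac | by rewrite inE].
- have Hc : in3 e u c by exact: in3_closed Ha Eac.
  move: Hcb => /orP[/eqP Ecb|Ecb].
  + apply: dist_one; [lia | by rewrite -Ecb | by rewrite inE].
  + apply: (dist_two (a := c)); rewrite ?inE //; lia.
- have Hd : in3 e u d by exact: in3_closed Ha Ead.
  have Hc : in3 e u c by exact: in3_closed Hd Edc.
  move: Hcb => /orP[/eqP Ecb|Ecb].
  + apply: (dist_two (a := d)); rewrite ?inE -?Ecb //; lia.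
  + apply: (dist_three (a := d) (b := c)); rewrite ?inE //; lia.
Qed.

Definition cnt3 n (e : rel 'I_n) p := count (in3n e p) (iota 0 n).

Lemma cnt3E n (e : rel 'I_n) (x : 'I_n) : cnt3 e x = #|B3 e x|.
Proof. rewrite /cnt3 count_iota_card; apply: eq_card => y; by rewrite !inE in3nE. Qed.

Theorem three_iff n (e : rel 'I_n) l s : symmetric e -> irreflexive e -> indep_number_le2 e ->
  2 < s -> sclub_yes e s l <-> l <= best3 e n.
Proof.
move=> Hs Hirr Hind Hs3.
have Hb : best3 e n = fm predT (cnt3 e) n by [].
split.
- case=> S [HlS HS]; apply: (leq_trans HlS).
  case: (set_0Vmem S) => [->|[u Hu]]; first by rewrite cards0.
  apply: (@leq_trans #|B3 e u|).
    apply: subset_leq_card; apply/subsetP => v Hv; rewrite inE.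
    have [p [_ Hp Hl _]] := HS u v Hu Hv.
    by rewrite -Hl; apply: in3_path => //; exact: in3_refl.
  by rewrite -cnt3E Hb; apply: fm_ub.
- move=> Hl; case: (posnP l) => [->|Hl0].
    by exists set0; split => // u v; rewrite inE.
  have Hn : 0 < n.
    case: (posnP n) => // Hn0.
    have Hi : iota 0 n = [::] by rewrite Hn0.
    by move: Hl Hl0; rewrite /best3 Hi /=; lia.
  have Hh : has predT (iota 0 n) by rewrite has_predT size_iota.
  have [p Hp [_ Hfm]] := fm_att (cnt3 e) Hh.
  exists (B3 e (Ordinal Hp)); split; last exact: B3_club.
  by rewrite -cnt3E /=; move: Hl; rewrite Hb Hfm.
Qed.


Lemma Bfor_le n Bb c d : Bb <= c * (n.+1) ^ d -> Bfor n Bb <= (c + 7) * (n.+1) ^ d.+1.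
Proof.
move=> H; rewrite /Bfor expnS.
have X1 : 1 <= n.+1 ^ d by rewrite expn_gt0.
move: H X1; set X := n.+1 ^ d => H X1.
nia.
Qed.

Lemma in2B_le n : in2B n <= 78 * (n.+1) ^ 2.
Proof.
have H : 8 * n + 35 <= 43 * (n.+1) ^ 1 by rewrite expn1; lia.
have := Bfor_le H. rewrite /in2B. nia.
Qed.

Lemma in3B_le n : in3B n <= 120 * (n.+1) ^ 3.
Proof.
have H : in2B n + 4 * n + 30 <= 112 * (n.+1) ^ 2 by have := in2B_le n; nia.
have := Bfor_le H. rewrite /in3B. have : 1 <= n.+1 ^ 3 by rewrite expn_gt0. lia.
Qed.

Lemma main3B_le n : main3B n <= 163 * (n.+1) ^ 5.
Proof.
have P3 : 1 <= n.+1 ^ 3 by rewrite expn_gt0.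
have H : in3B n + 3 <= 123 * (n.+1) ^ 3 by have := in3B_le n; lia.
have H2 := Bfor_le H.
have H3 : 2 + Bfor n (in3B n + 3) + 10 <= 142 * (n.+1) ^ 4.
  have : 1 <= n.+1 ^ 4 by rewrite expn_gt0. lia.
have := Bfor_le H3. rewrite /main3B. have : 1 <= n.+1 ^ 5 by rewrite expn_gt0. lia.
Qed.

Lemma main2B_le n : main2B n <= 163 * (n.+1) ^ 5.
Proof.
have P2 : 1 <= n.+1 ^ 2 by rewrite expn_gt0.
have H : in2B n + 3 <= 81 * (n.+1) ^ 2 by have := in2B_le n; lia.
have H2 := Bfor_le H.
have H3 : 2 + Bfor n (in2B n + 3) + 10 <= 100 * (n.+1) ^ 3.
  have : 1 <= n.+1 ^ 3 by rewrite expn_gt0. lia.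
have := Bfor_le H3. rewrite /main2B.
have : n.+1 ^ 4 <= n.+1 ^ 5 by apply: leq_pexp2l.
have : 1 <= n.+1 ^ 5 by rewrite expn_gt0. lia.
Qed.


Definition algc s R := CSeq (CI (IConst (rg R 1) 1)) (if s == 2 then main2 R else main3 R).

Lemma Znot s R : rg R 0 \notin writes (algc s R).
Proof. by rewrite /algc; case: (s == 2); rewrite /= !inE !rg_eq. Qed.

Lemma alg_spec s n (e : rel 'I_n) l R m : 2 <= s ->
  symmetric e -> irreflexive e -> indep_number_le2 e ->
  Rok n R -> m (rg R 0) = 0 -> Mem0 e l m ->
  Run (algc s R) m (fun m' k => k <= 1 + 163 * (n.+1) ^ 5 /\ ((m' 0 != 0) <-> sclub_yes e s l)).
Proof.
move=> H2s Hs Hirr Hind HR HZ [M0 M1 M2].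
apply: run_seq; apply: run_set => m1 E1 F1.
have B1 : Base e l R m1.
  split; first by rewrite F1 ?rg_eq.
  - by [].
  split; first by rewrite F1.
  - by rewrite F1.
  - move=> i j Hij; rewrite F1 ?M2 //; apply/eqP => E; move: (HR i j Hij); rewrite E /rg; lia.
case Es: (s == 2).
- apply: run_weaken (main2_spec Hs Hirr HR B1) _ => m' k _ [Hk ->]; split.
  + have := main2B_le n; lia.
  + by rewrite (eqP Es) two_iff //; split => /idP.
- apply: run_weaken (main3_spec Hs Hirr HR B1) _ => m' k _ [Hk ->]; split.
  + have := main3B_le n; lia.
  + have Hs3 : 2 < s by move: H2s Es; rewrite leq_eqVlt eq_sym => /orP[->|].
    by rewrite (three_iff l Hs Hirr Hind Hs3); split => /idP.
Qed.

Definition Rs := 1600.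

Definition prog s : program :=
  [:: IConst 2 40; ISub 2 2 0; IJz 2 (4 + csize (algc s Rs))] ++
  compile (rg Rs 0) 3 (algc s Rs) ++ [:: IHalt] ++
  compile (rg 0 0) (4 + csize (algc s Rs)) (algc s 0).

Lemma step_end P pc m : size P <= pc -> step P (pc, m) = None.
Proof. by move=> H; rewrite /step ltnNge H. Qed.

Lemma init_lower n (e : rel 'I_n) l i j : j < i < n ->
  init_mem e l (2 + i * n + j) = edge_nat e i j.
Proof.
move=> /andP[Hji Hin].
have Hjn : j < n by apply: ltn_trans Hin.
have Hn : 0 < n by apply: leq_ltn_trans Hin.
rewrite /init_mem.
have -> : (2 + i * n + j == 0) = false by [].
have -> : (2 + i * n + j == 1) = false by rewrite -addnA.
have -> : 2 + i * n + j < 2 + n * n by nia.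
have -> : 2 + i * n + j - 2 = i * n + j by lia.
by rewrite divnMDl // modnMDl divn_small // modn_small // addn0.
Qed.

Theorem main_thm (s : nat) (hs : 2 <= s) :
  exists (P : program) (c k : nat),
    forall (n : nat) (e : rel 'I_n) (l : nat),
      symmetric e -> irreflexive e -> indep_number_le2 e ->
      decides_within P (c * (input_size n l).+1 ^ k) (init_mem e l)
                     (sclub_yes e s l).
Proof.
exists (prog s), 200, 5 => n e l Hs Hirr Hind.
set i0 := IConst 2 40; set i1 := ISub 2 2 0; set t := 4 + csize (algc s Rs).
set i2 := IJz 2 t.
set cS := compile (rg Rs 0) 3 (algc s Rs); set cL := compile (rg 0 0) t (algc s 0).
have HP : prog s = [:: i0; i1; i2] ++ cS ++ [:: IHalt] ++ cL by [].
have Ecs : size cS = csize (algc s Rs) by rewrite /cS size_compile.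
have Ecl : size cL = csize (algc s 0) by rewrite /cL size_compile.
set init := init_mem e l.
set m2 := upd (upd init 2 40) 2 (40 - n).
have C0 : code_at (prog s) 0 [:: i0] by exists [::], (i1 :: i2 :: cS ++ [:: IHalt] ++ cL).
have C1 : code_at (prog s) 1 [:: i1] by exists [:: i0], (i2 :: cS ++ [:: IHalt] ++ cL).
have C2 : code_at (prog s) 2 [:: i2] by exists [:: i0; i1], (cS ++ [:: IHalt] ++ cL).
have Hinit0 : init 0 = n by [].
have S3 : steps (prog s) 3 (0, init) = Some (if 40 - n == 0 then t else 3, m2).
  have SS : forall st st' k, step (prog s) st = Some st' -> steps (prog s) k.+1 st = steps (prog s) k st'.
    by move=> st st' k H; rewrite steps_S H.
  rewrite (SS _ _ _ (code_at_step init C0)) (SS _ _ _ (code_at_step _ C1)).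
  rewrite (SS _ _ _ (code_at_step _ C2)) steps_0.
  by rewrite /m2 /upd /= Hinit0.
have Hm2 x : x != 2 -> m2 x = init x by move=> /negbTE H; rewrite /m2 /upd H.
have M0 : Mem0 e l m2.
  split; rewrite ?Hm2 //.
  move=> i j Hij; rewrite Hm2; first exact: init_lower.
  case/andP: Hij => H1 H2; apply/eqP => E.
  have : 2 + n <= 2 + i * n + j by rewrite -addnA leq_add2l; apply: leq_trans (leq_addr _ _); rewrite leq_pmull //; lia.
  rewrite E; lia.
have Hbound : 3 + (1 + 163 * (n.+1) ^ 5) <= 200 * (input_size n l).+1 ^ 5.
  have Hle : n.+1 <= (input_size n l).+1 by rewrite ltnS /input_size; nia.
  have := leq_exp2r n.+1 (input_size n l).+1 (isT : 0 < 5); rewrite Hle => H.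
  have : 1 <= n.+1 ^ 5 by rewrite expn_gt0. lia.
case: (eqVneq (40 - n) 0) S3 => H40 S3.
-
  have HR : Rok n 0.
    move=> i j /andP[Hji Hin]; apply/orP; right.
    have : n <= i * n by rewrite leq_pmull //; lia.
    move: H40; rewrite /rg; lia.
  have HZ : m2 (rg 0 0) = 0 by rewrite /m2 /upd eqxx.
  have [m' [k [Hbs [Hk Hiff]]]] := alg_spec hs Hs Hirr Hind HR HZ M0.
  have CL : code_at (prog s) t cL.
    exists ([:: i0; i1; i2] ++ cS ++ [:: IHalt]), [::]; split; first by rewrite HP -!catA cats0.
    rewrite (size_cat [:: i0; i1; i2] (cS ++ [:: IHalt])) (size_cat cS [:: IHalt]) Ecs /t.
    change (size [:: i0; i1; i2]) with 3; change (size [:: IHalt]) with 1; lia.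
  have Hst := bs_sound Hbs (Znot s 0) HZ CL.
  exists m'; split => //.
  apply: (run_steps (k := 3 + k) (st' := (t + csize (algc s 0), m'))).
  + by rewrite steps_add S3 Hst.
  + apply: step_end; rewrite HP (size_cat [:: i0; i1; i2] (cS ++ [:: IHalt] ++ cL)).
    rewrite (size_cat cS ([:: IHalt] ++ cL)) (size_cat [:: IHalt] cL) Ecs Ecl /t.
    change (size [:: i0; i1; i2]) with 3; change (size [:: IHalt]) with 1; lia.
  + by apply: leq_trans Hbound; lia.
-
  have Hn40 : n < 40 by move: H40; lia.
  have HR : Rok n Rs.
    move=> i j /andP[Hji Hin]; apply/orP; left.
    have : i * n + j < n * n by nia.
    rewrite /rg /Rs; nia.
  have HZ : m2 (rg Rs 0) = 0.
    rewrite Hm2 // /init /init_mem /rg /Rs /=.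
    have -> : 1602 < 2 + n * n = false by apply/negbTE; rewrite -leqNgt; nia.
    by [].
  have [m' [k [Hbs [Hk Hiff]]]] := alg_spec hs Hs Hirr Hind HR HZ M0.
  have CS : code_at (prog s) 3 cS by exists [:: i0; i1; i2], ([:: IHalt] ++ cL).
  have Hst := bs_sound Hbs (Znot s Rs) HZ CS.
  have CH : code_at (prog s) (3 + csize (algc s Rs)) [:: IHalt].
    exists ([:: i0; i1; i2] ++ cS), cL; split; first by rewrite HP -!catA.
    by rewrite (size_cat [:: i0; i1; i2] cS) Ecs.
  exists m'; split => //.
  apply: (run_steps (k := 3 + k) (st' := (3 + csize (algc s Rs), m'))).
  + by rewrite steps_add S3 Hst.
  + by rewrite (code_at_step m' CH).
  + by apply: leq_trans Hbound; lia.
Qed.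

Unset Implicit Arguments.

Theorem mainTheorem2 (s : nat) (hs : 2 <= s) :
  exists (P : program) (c k : nat),
    forall (n : nat) (e : rel 'I_n) (l : nat),
      symmetric e -> irreflexive e -> indep_number_le2 e ->
      decides_within P (c * (input_size n l).+1 ^ k) (init_mem e l)
                     (sclub_yes e s l).
Proof. exact: (main_thm hs). Qed.
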